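(* Let $\alpha>-1$ and $\beta>0$. Let $\Phi:[0,\infty)\to\mathbb{R}$ be twice differentiable with $\Phi,\Phi',\Phi''$ bounded and continuous on $[0,\infty)$. Then for every $x\in[0,\infty)$, $$\lim_{\eta\to\infty}\eta\left[\mathcal{R}_{\eta}^{(\alpha,\beta)}(\Phi;x)-\Phi(x)\right]=(1+\alpha)\Phi'(x)+\frac{x(3\beta+1)}{2\beta}\Phi''(x).$$
   Context: The generalized Laguerre polynomials are $\mathcal{L}_k^{(\alpha)}(t)=\sum_{i=0}^{k}\frac{(-1)^i}{i!}\binom{k+\alpha}{k-i}t^i$. Put $p_{\eta,k}(x)=e^{-\eta x/2}2^{-\alpha-1}2^{-k}\mathcal{L}_k^{(\alpha)}(-\eta x/2)$ and, for $k\ge1$, $z>0$, $\mathcal{I}_{k,\eta}^{\beta}(z)=\frac{\eta\beta e^{-\eta\beta z}(\eta\beta z)^{k\beta-1}}{\Gamma(k\beta)}$. The operator is $\mathcal{R}_{\eta}^{(\alpha,\beta)}(\Phi;x)=p_{\eta,0}(x)\Phi(0)+\sum_{k=1}^{\infty}p_{\eta,k}(x)\int_0^\infty\mathcal{I}_{k,\eta}^{\beta}(z)\Phi(z)\,dz$, $\eta>0$. *)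

(* Defs.v *)
From Stdlib Require Import Reals Factorial.
From Coquelicot Require Import Coquelicot.
Open Scope R_scope.

Fixpoint falling (a : R) (m : nat) : R :=
  match m with O => 1 | S m' => falling a m' * (a - INR m') end.
Definition gbinom (a : R) (m : nat) : R := falling a m / INR (fact m).

Definition laguerre (alpha : R) (k : nat) (t : R) : R :=
  sum_n (fun i => (-1) ^ i / INR (fact i) * gbinom (INR k + alpha) (k - i) * t ^ i) k.

Definition p_eta (alpha eta : R) (k : nat) (x : R) : R :=
  exp (- eta * x / 2) * Rpower 2 (- alpha - 1) * / 2 ^ k
  * laguerre alpha k (- eta * x / 2).

Definition Gamma (s : R) : R :=
  RInt_gen (fun t => Rpower t (s - 1) * exp (- t)) (at_right 0) (Rbar_locally p_infty).

Definition I_ker (beta eta : R) (k : nat) (z : R) : R :=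
  eta * beta * exp (- eta * beta * z) * Rpower (eta * beta * z) (INR k * beta - 1)
  / Gamma (INR k * beta).

Definition R_op (alpha beta eta : R) (Phi : R -> R) (x : R) : R :=
  p_eta alpha eta 0 x * Phi 0
  + Series (fun j => p_eta alpha eta (S j) x *
       RInt_gen (fun z => I_ker beta eta (S j) z * Phi z) (at_right 0) (Rbar_locally p_infty)).

Definition deriv_on_nonneg (f f' : R -> R) : Prop :=
  forall x, 0 <= x ->
    filterlim (fun h => (f (x + h) - f x) / h)
      (within (fun h => h <> 0 /\ 0 <= x + h) (locally 0)) (locally (f' x)).

Definition cont_on_nonneg (f : R -> R) : Prop :=
  forall x, 0 <= x -> filterlim f (within (fun y => 0 <= y) (locally x)) (locally (f x)).

Definition bounded_on_nonneg (f : R -> R) : Prop :=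
  exists M, forall x, 0 <= x -> Rabs (f x) <= M.

(* Main.v *)
Require Import Defs.
From Stdlib Require Import Reals Factorial Lra Lia Psatz ZArith.
From Coquelicot Require Import Coquelicot.
Open Scope R_scope.


Lemma falling_pos : forall m a, (forall l, (l < m)%nat -> 0 < a - INR l) -> 0 < falling a m.
Proof.
  induction m as [|m IH]; intros a H; simpl.
  - lra.
  - apply Rmult_lt_0_compat. apply IH; intros l Hl; apply H; lia. apply H; lia.
Qed.

Lemma falling_shift : forall m a, falling (a+1) (S m) = (a+1) * falling a m.
Proof.
  induction m as [|m IH]; intros a.
  - simpl. ring.
  - change (falling (a+1) (S (S m))) with (falling (a+1) (S m) * (a + 1 - INR (S m))).
    rewrite IH. simpl falling. rewrite S_INR. ring.
Qed.

Definition nb (b : R) (m : nat) : R := gbinom (INR m + b) m / 2 ^ m.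

Lemma gbinom_pos : forall b m, -1 < b -> 0 < gbinom (INR m + b) m.
Proof.
  intros b m Hb. unfold gbinom. apply Rdiv_lt_0_compat.
  apply falling_pos. intros l Hl. apply le_INR in Hl. rewrite S_INR in Hl. lra.
  apply lt_0_INR. apply lt_O_fact.
Qed.

Lemma nb_pos : forall b m, -1 < b -> 0 < nb b m.
Proof.
  intros. unfold nb. apply Rdiv_lt_0_compat. now apply gbinom_pos. apply pow_lt; lra.
Qed.

Lemma nb_shift : forall b n, INR (S n) * nb b (S n) = (b+1)/2 * nb (b+1) n.
Proof.
  intros b n. unfold nb, gbinom.
  replace (INR (S n) + b) with (INR n + b + 1) by (rewrite S_INR; ring).
  simpl falling.
  replace (INR n + b + 1 - INR n) with (b+1) by ring.
  replace (INR n + (b + 1)) with (INR n + b + 1) by ring.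
  rewrite fact_simpl, mult_INR. simpl pow.
  assert (0 < INR (fact n)) by (apply lt_0_INR; apply lt_O_fact).
  assert (0 < INR (S n)) by (apply lt_0_INR; lia).
  assert (0 < 2 ^ n) by (apply pow_lt; lra).
  field. lra.
Qed.

Lemma gbinom_ratio : forall b m,
  gbinom (INR (S m) + b) (S m) = gbinom (INR m + b) m * (INR m + 1 + b) / (INR m + 1).
Proof.
  intros b m. unfold gbinom.
  replace (INR (S m) + b) with ((INR m + b) + 1) by (rewrite S_INR; ring).
  rewrite falling_shift. rewrite fact_simpl, mult_INR, S_INR.
  assert (0 < INR (fact m)) by (apply lt_0_INR; apply lt_O_fact).
  assert (0 <= INR m) by apply pos_INR.
  field. lra.
Qed.


Lemma ser_sc : forall (a : nat -> R) (l c : R), is_series a l -> is_series (fun n => c * a n) (c * l).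
Proof. intros. apply (is_series_scal c a l H). Qed.
Lemma ser_pl : forall (a b : nat -> R) (la lb : R), is_series a la -> is_series b lb ->
  is_series (fun n => a n + b n) (la + lb).
Proof. intros. apply (is_series_plus a b la lb H H0). Qed.
Lemma ser_ext : forall (a b : nat -> R) (l : R), (forall n, a n = b n) -> is_series a l -> is_series b l.
Proof. intros. apply (is_series_ext a b l H H0). Qed.
Lemma ser_uniq : forall (a : nat -> R) (l1 l2 : R), is_series a l1 -> is_series a l2 -> l1 = l2.
Proof. intros. apply is_series_unique in H. apply is_series_unique in H0. congruence. Qed.

Lemma ser_shift0 : forall (a : nat -> R) (l : R), a O = 0 -> is_series (fun n => a (S n)) l -> is_series a l.
Proof.
  intros a l H0 H. apply is_series_decr_1. rewrite H0.
  unfold plus, opp; simpl. replace (l + - 0) with l by ring. exact H.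
Qed.

Section T.
Variable b : R.
Hypothesis Hb : -1 < b.
Let c := fun m => gbinom (INR m + b) m.

Lemma c_pos : forall m, 0 < c m.
Proof. intros. apply gbinom_pos; auto. Qed.

Lemma c_radius : CV_radius c = 1.
Proof.
  assert (Hc : forall n, c n <> 0) by (intros; apply Rgt_not_eq, c_pos).
  assert (Hlim : is_lim_seq (fun n : nat => Rabs (c (S n) / c n)) 1).
  2:{ rewrite (CV_radius_finite_DAlembert c 1 Hc Rlt_0_1 Hlim). f_equal; field. }
  apply is_lim_seq_ext with (fun n => 1 + b * / (INR n + 1)).
  - intros n. unfold c. rewrite gbinom_ratio.
    assert (0 < gbinom (INR n + b) n) by (apply gbinom_pos; auto).
    assert (0 <= INR n) by apply pos_INR.
    replace (gbinom (INR n + b) n * (INR n + 1 + b) / (INR n + 1) / gbinom (INR n + b) n)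
      with ((INR n + 1 + b) / (INR n + 1)) by (field; split; lra).
    rewrite Rabs_pos_eq. field. lra.
    apply Rdiv_le_0_compat; lra.
  - assert (H : is_lim_seq (fun n => 1 + b * / (INR n + 1)) (1 + b * 0)).
    2:{ rewrite Rmult_0_r, Rplus_0_r in H. exact H. }
    apply (is_lim_seq_plus' _ _ 1 (b*0)). apply is_lim_seq_const.
    apply (is_lim_seq_scal_l _ b 0).
    replace (Finite 0) with (Rbar_inv p_infty) by reflexivity.
    apply is_lim_seq_inv. 2: discriminate.
    apply is_lim_seq_ext with (fun n => INR (S n)). intros; rewrite S_INR; ring.
    apply (is_lim_seq_incr_1 INR p_infty). apply is_lim_seq_INR.
Qed.

Lemma c_inside : forall w, Rabs w < 1 -> Rbar_lt (Rabs w) (CV_radius c).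
Proof. intros. rewrite c_radius. simpl. auto. Qed.

Lemma c_ode : forall w, Rabs w < 1 ->
  (1 - w) * PSeries (PS_derive c) w = (1 + b) * PSeries c w.
Proof.
  intros w Hw.
  assert (HD := PSeries_correct _ _ (ex_pseries_derive c w (c_inside w Hw))).
  assert (HF := PSeries_correct _ _ (CV_radius_inside c w (c_inside w Hw))).
  set (D := PSeries (PS_derive c) w) in *. set (F := PSeries c w) in *.
  unfold is_pseries in HD, HF.
  assert (HD' : is_series (fun n => c n * (INR n + 1 + b) * w ^ n) D).
  { eapply is_series_ext; [|exact HD]. intros n. simpl. rewrite pow_n_pow.
    unfold PS_derive, c. rewrite gbinom_ratio, S_INR.
    unfold scal; simpl; unfold mult; simpl.
    assert (0 <= INR n) by apply pos_INR. field. lra. }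
  assert (HF' : is_series (fun n => c n * w ^ n) F).
  { eapply is_series_ext; [|exact HF]. intros n. rewrite pow_n_pow. unfold scal; simpl; unfold mult; simpl. rewrite pow_n_pow. ring. }
  assert (H1 : is_series (fun n => INR n * c n * w ^ n) (w * D)).
  { apply ser_shift0. simpl. ring.
    eapply ser_ext; [|apply (ser_sc _ _ w HD')]. intros n.
    unfold c. rewrite gbinom_ratio. rewrite S_INR. change (w ^ S n) with (w * w ^ n).
    assert (0 <= INR n) by apply pos_INR. field. lra. }
  assert (H2 := ser_pl _ _ _ _ H1 (ser_sc _ _ (1 + b) HF')).
  assert (H3 : is_series (fun n => c n * (INR n + 1 + b) * w ^ n) (w * D + (1 + b) * F)).
  { eapply ser_ext; [|exact H2]. intros n; simpl. ring. }
  assert (E := ser_uniq _ _ _ HD' H3). lra.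
Qed.

Lemma T_value : PSeries c (/2) = Rpower 2 (b + 1).
Proof.
  set (g := fun w => PSeries c w * exp ((b + 1) * ln (1 - w))).
  assert (Hder : forall w, -1 < w < 1 -> is_derive g w 0).
  { intros w Hw. unfold g.
    assert (Hr : Rabs w < 1) by (apply Rabs_def1; lra).
    assert (Hf := is_derive_PSeries c w (c_inside w Hr)).
    assert (He : is_derive (fun w => exp ((b + 1) * ln (1 - w))) w
                   (exp ((b + 1) * ln (1 - w)) * ((b+1) * (- / (1 - w))))).
    { auto_derive. lra. replace (1 + - w) with (1 - w) by ring. field. lra. }
    assert (Hm := is_derive_mult _ _ _ _ _ Hf He).
    replace 0 with (plus (mult (PSeries (PS_derive c) w) (exp ((b + 1) * ln (1 - w))))
       (mult (PSeries c w) (exp ((b + 1) * ln (1 - w)) * ((b + 1) * - / (1 - w))))).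
    apply Hm. intros; apply Rmult_comm.
    unfold plus, mult; simpl.
    assert (E := c_ode w Hr).
    assert (0 < exp ((b + 1) * ln (1 - w))) by apply exp_pos.
    apply Rmult_eq_reg_l with (1 - w); [|lra].
    transitivity (exp ((b + 1) * ln (1 - w)) * ((1 - w) * PSeries (PS_derive c) w - (b + 1) * PSeries c w)).
    field. lra. rewrite E. ring. }
  destruct (MVT_gen g 0 (/2) (fun _ => 0)) as [x [Hx E]].
  - intros x Hx. rewrite Rmin_left, Rmax_right in Hx by lra. apply Hder; lra.
  - intros x Hx. rewrite Rmin_left, Rmax_right in Hx by lra.
    apply continuity_pt_filterlim. apply (ex_derive_continuous g x).
    exists 0. apply Hder; lra.
  - unfold g in E. rewrite PSeries_0 in E. rewrite Rminus_0_r, ln_1, Rmult_0_r, exp_0 in E.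
    assert (Hc0 : c O = 1) by (unfold c, gbinom; simpl; field).
    rewrite Hc0 in E.
    replace (1 - /2) with (/2) in E by field.
    rewrite ln_Rinv in E by lra.
    assert (PSeries c (/ 2) * exp ((b + 1) * - ln 2) = 1) by lra.
    unfold Rpower. replace ((b + 1) * - ln 2) with (- ((b+1) * ln 2)) in H by ring.
    rewrite exp_Ropp in H.
    assert (0 < exp ((b + 1) * ln 2)) by apply exp_pos.
    apply Rmult_eq_reg_r with (/ exp ((b + 1) * ln 2)). rewrite H. field. lra.
    apply Rgt_not_eq, Rinv_0_lt_compat; auto.
Qed.

Lemma T_series : is_series (nb b) (Rpower 2 (b + 1)).
Proof.
  rewrite <- T_value.
  assert (Hr : Rabs (/2) < 1) by (rewrite Rabs_pos_eq; lra).
  assert (HF := PSeries_correct _ _ (CV_radius_inside c _ (c_inside _ Hr))).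
  eapply ser_ext; [|exact HF]. intros n.
  unfold scal; simpl; unfold mult; simpl. rewrite pow_n_pow. unfold nb, c. rewrite pow_inv. field.
  apply pow_nonzero; lra.
Qed.
End T.


Section Comb.
Variable w : nat -> R.
Lemma comb2 : forall L0 L1 c0 c1,
  is_series (fun m => w m * INR m ^ 0) L0 -> is_series (fun m => w m * INR m ^ 1) L1 ->
  is_series (fun m => w m * (c0 + c1 * INR m)) (c0 * L0 + c1 * L1).
Proof.
  intros. eapply ser_ext; [|apply (ser_pl _ _ _ _ (ser_sc _ _ c0 H) (ser_sc _ _ c1 H0))].
  intros; simpl; ring.
Qed.
Lemma comb3 : forall L0 L1 L2 c0 c1 c2,
  is_series (fun m => w m * INR m ^ 0) L0 -> is_series (fun m => w m * INR m ^ 1) L1 ->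
  is_series (fun m => w m * INR m ^ 2) L2 ->
  is_series (fun m => w m * (c0 + c1 * INR m + c2 * INR m ^ 2)) (c0 * L0 + c1 * L1 + c2 * L2).
Proof.
  intros. eapply ser_ext; [|apply (ser_pl _ _ _ _ (comb2 _ _ c0 c1 H H0) (ser_sc _ _ c2 H1))].
  intros; simpl; ring.
Qed.
Lemma comb4 : forall L0 L1 L2 L3 c0 c1 c2 c3,
  is_series (fun m => w m * INR m ^ 0) L0 -> is_series (fun m => w m * INR m ^ 1) L1 ->
  is_series (fun m => w m * INR m ^ 2) L2 -> is_series (fun m => w m * INR m ^ 3) L3 ->
  is_series (fun m => w m * (c0 + c1 * INR m + c2 * INR m ^ 2 + c3 * INR m ^ 3))
    (c0 * L0 + c1 * L1 + c2 * L2 + c3 * L3).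
Proof.
  intros. eapply ser_ext; [|apply (ser_pl _ _ _ _ (comb3 _ _ _ c0 c1 c2 H H0 H1) (ser_sc _ _ c3 H2))].
  intros; simpl; ring.
Qed.
Lemma comb5 : forall L0 L1 L2 L3 L4 c0 c1 c2 c3 c4,
  is_series (fun m => w m * INR m ^ 0) L0 -> is_series (fun m => w m * INR m ^ 1) L1 ->
  is_series (fun m => w m * INR m ^ 2) L2 -> is_series (fun m => w m * INR m ^ 3) L3 ->
  is_series (fun m => w m * INR m ^ 4) L4 ->
  is_series (fun m => w m * (c0 + c1 * INR m + c2 * INR m ^ 2 + c3 * INR m ^ 3 + c4 * INR m ^ 4))
    (c0 * L0 + c1 * L1 + c2 * L2 + c3 * L3 + c4 * L4).
Proof.
  intros. eapply ser_ext; [|apply (ser_pl _ _ _ _ (comb4 _ _ _ _ c0 c1 c2 c3 H H0 H1 H2) (ser_sc _ _ c4 H3))].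
  intros; simpl; ring.
Qed.
End Comb.

Lemma shift_rule : forall (w v : nat -> R) (k : R) (h : nat -> R) (L : R),
  (forall n, INR (S n) * w (S n) = k * v n) ->
  is_series (fun n => v n * h (S n)) L ->
  is_series (fun m => w m * (INR m * h m)) (k * L).
Proof.
  intros w v k h L Hs H. apply ser_shift0. simpl. ring.
  eapply ser_ext; [|apply (ser_sc _ _ k H)]. intros n.
  transitivity ((INR (S n) * w (S n)) * h (S n)). rewrite Hs. ring. ring.
Qed.

Definition n1 b := b + 1.
Definition n2 b := b^2 + 4*b + 3.
Definition n3 b := b^3 + 9*b^2 + 21*b + 13.
Definition n4 b := b^4 + 16*b^3 + 78*b^2 + 138*b + 75.

Lemma R2 : forall b, Rpower 2 (b + 1 + 1) = 2 * Rpower 2 (b + 1).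
Proof. intros. rewrite Rpower_plus, Rpower_1 by lra. ring. Qed.

Lemma nb_m0 : forall b, -1 < b -> is_series (fun m => nb b m * INR m ^ 0) (Rpower 2 (b+1)).
Proof. intros. eapply ser_ext; [|apply T_series; auto]. intros; simpl; ring. Qed.

Lemma nb_m1 : forall b, -1 < b -> is_series (fun m => nb b m * INR m ^ 1) (Rpower 2 (b+1) * n1 b).
Proof.
  intros b Hb.
  assert (H := shift_rule (nb b) (nb (b+1)) ((b+1)/2) (fun _ => 1) _ (nb_shift b)
     (nb_m0 (b+1) ltac:(lra))).
  apply (ser_ext _ (fun m => nb b m * INR m ^ 1)) in H; [| intros; simpl; ring].
  replace (Rpower 2 (b + 1) * n1 b) with ((b + 1) / 2 * Rpower 2 (b + 1 + 1)).
  exact H. rewrite R2. unfold n1. field.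
Qed.

Lemma nb_m2 : forall b, -1 < b -> is_series (fun m => nb b m * INR m ^ 2) (Rpower 2 (b+1) * n2 b).
Proof.
  intros b Hb. set (b' := b + 1).
  assert (Hc := comb2 (nb b') _ _ 1 1 (nb_m0 b' ltac:(unfold b'; lra)) (nb_m1 b' ltac:(unfold b'; lra))).
  apply (ser_ext _ (fun n => nb b' n * (INR (S n))^1)) in Hc; [| intros n; rewrite S_INR; ring].
  apply (shift_rule (nb b) (nb b') ((b+1)/2) (fun m => INR m ^ 1) _ (nb_shift b)) in Hc.
  apply (ser_ext _ (fun m => nb b m * INR m ^ 2)) in Hc; [| intros; simpl; ring].
  match type of Hc with is_series _ ?V => match goal with |- is_series _ ?G => replace G with V end end.
  exact Hc. unfold b'. rewrite R2. unfold n1, n2. field.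
Qed.

Lemma nb_m3 : forall b, -1 < b -> is_series (fun m => nb b m * INR m ^ 3) (Rpower 2 (b+1) * n3 b).
Proof.
  intros b Hb. set (b' := b + 1).
  assert (Hc := comb3 (nb b') _ _ _ 1 2 1 (nb_m0 b' ltac:(unfold b'; lra)) (nb_m1 b' ltac:(unfold b'; lra)) (nb_m2 b' ltac:(unfold b'; lra))).
  apply (ser_ext _ (fun n => nb b' n * (INR (S n))^2)) in Hc; [| intros n; rewrite S_INR; ring].
  apply (shift_rule (nb b) (nb b') ((b+1)/2) (fun m => INR m ^ 2) _ (nb_shift b)) in Hc.
  apply (ser_ext _ (fun m => nb b m * INR m ^ 3)) in Hc; [| intros; simpl; ring].
  match type of Hc with is_series _ ?V => match goal with |- is_series _ ?G => replace G with V end end.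
  exact Hc. unfold b'. rewrite R2. unfold n1, n2, n3. field.
Qed.

Lemma nb_m4 : forall b, -1 < b -> is_series (fun m => nb b m * INR m ^ 4) (Rpower 2 (b+1) * n4 b).
Proof.
  intros b Hb. set (b' := b + 1).
  assert (Hc := comb4 (nb b') _ _ _ _ 1 3 3 1 (nb_m0 b' ltac:(unfold b'; lra)) (nb_m1 b' ltac:(unfold b'; lra)) (nb_m2 b' ltac:(unfold b'; lra)) (nb_m3 b' ltac:(unfold b'; lra))).
  apply (ser_ext _ (fun n => nb b' n * (INR (S n))^3)) in Hc; [| intros n; rewrite S_INR; ring].
  apply (shift_rule (nb b) (nb b') ((b+1)/2) (fun m => INR m ^ 3) _ (nb_shift b)) in Hc.
  apply (ser_ext _ (fun m => nb b m * INR m ^ 4)) in Hc; [| intros; simpl; ring].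
  match type of Hc with is_series _ ?V => match goal with |- is_series _ ?G => replace G with V end end.
  exact Hc. unfold b'. rewrite R2. unfold n1, n2, n3, n4. field.
Qed.

Lemma nb_poly : forall b c0 c1 c2 c3 c4, -1 < b ->
  is_series (fun m => nb b m * (c0 + c1 * INR m + c2 * INR m ^ 2 + c3 * INR m ^ 3 + c4 * INR m ^ 4))
    (Rpower 2 (b+1) * (c0 + c1 * n1 b + c2 * n2 b + c3 * n3 b + c4 * n4 b)).
Proof.
  intros. assert (Hc := comb5 _ _ _ _ _ _ c0 c1 c2 c3 c4 (nb_m0 b H) (nb_m1 b H) (nb_m2 b H) (nb_m3 b H) (nb_m4 b H)).
  match type of Hc with is_series _ ?V => match goal with |- is_series _ ?G => replace G with V by ring end end.
  exact Hc.
Qed.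


Definition pois (u : R) (i : nat) : R := exp (- u) * u ^ i / INR (fact i).

Lemma pois_nonneg : forall u i, 0 <= u -> 0 <= pois u i.
Proof.
  intros. unfold pois. apply Rdiv_le_0_compat.
  apply Rmult_le_pos. left; apply exp_pos. apply pow_le; auto.
  apply lt_0_INR, lt_O_fact.
Qed.

Lemma pois_shift : forall u n, INR (S n) * pois u (S n) = u * pois u n.
Proof.
  intros. unfold pois. rewrite fact_simpl, mult_INR. simpl pow.
  assert (0 < INR (fact n)) by (apply lt_0_INR, lt_O_fact).
  assert (0 < INR (S n)) by (apply lt_0_INR; lia). field. lra.
Qed.

Definition P1 (u : R) := u.
Definition P2 (u : R) := u + u^2.
Definition P3 (u : R) := u + 3*u^2 + u^3.
Definition P4 (u : R) := u + 7*u^2 + 6*u^3 + u^4.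

Lemma pois_m0 : forall u, is_series (fun i => pois u i * INR i ^ 0) 1.
Proof.
  intros. assert (H := is_exp_Reals u). unfold is_pseries in H.
  replace 1 with (exp (- u) * exp u) by (rewrite <- exp_plus; replace (-u+u) with 0 by ring; apply exp_0).
  eapply ser_ext; [|apply (ser_sc _ _ (exp (-u)) H)].
  intros n. unfold scal; simpl; unfold mult; simpl. rewrite pow_n_pow. unfold pois. field.
  apply INR_fact_neq_0.
Qed.

Lemma pois_m1 : forall u, is_series (fun i => pois u i * INR i ^ 1) (P1 u).
Proof.
  intros u. assert (Hc := pois_m0 u).
  apply (ser_ext _ (fun n => pois u n * (INR (S n))^0)) in Hc; [| intros n; ring].
  apply (shift_rule (pois u) (pois u) u (fun m => INR m ^ 0) _ (pois_shift u)) in Hc.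
  apply (ser_ext _ (fun m => pois u m * INR m ^ 1)) in Hc; [| intros; simpl; ring].
  unfold P1. rewrite Rmult_1_r in Hc. exact Hc.
Qed.

Lemma pois_m2 : forall u, is_series (fun i => pois u i * INR i ^ 2) (P2 u).
Proof.
  intros u.
  assert (Hc := comb2 (pois u) _ _ 1 1 (pois_m0 u) (pois_m1 u)).
  apply (ser_ext _ (fun n => pois u n * (INR (S n))^1)) in Hc; [| intros n; rewrite S_INR; ring].
  apply (shift_rule (pois u) (pois u) u (fun m => INR m ^ 1) _ (pois_shift u)) in Hc.
  apply (ser_ext _ (fun m => pois u m * INR m ^ 2)) in Hc; [| intros; simpl; ring].
  match type of Hc with is_series _ ?V => match goal with |- is_series _ ?G => replace G with V end end.
  exact Hc. unfold P1, P2. ring.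
Qed.

Lemma pois_m3 : forall u, is_series (fun i => pois u i * INR i ^ 3) (P3 u).
Proof.
  intros u.
  assert (Hc := comb3 (pois u) _ _ _ 1 2 1 (pois_m0 u) (pois_m1 u) (pois_m2 u)).
  apply (ser_ext _ (fun n => pois u n * (INR (S n))^2)) in Hc; [| intros n; rewrite S_INR; ring].
  apply (shift_rule (pois u) (pois u) u (fun m => INR m ^ 2) _ (pois_shift u)) in Hc.
  apply (ser_ext _ (fun m => pois u m * INR m ^ 3)) in Hc; [| intros; simpl; ring].
  match type of Hc with is_series _ ?V => match goal with |- is_series _ ?G => replace G with V end end.
  exact Hc. unfold P1, P2, P3. ring.
Qed.

Lemma pois_m4 : forall u, is_series (fun i => pois u i * INR i ^ 4) (P4 u).
Proof.
  intros u.
  assert (Hc := comb4 (pois u) _ _ _ _ 1 3 3 1 (pois_m0 u) (pois_m1 u) (pois_m2 u) (pois_m3 u)).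
  apply (ser_ext _ (fun n => pois u n * (INR (S n))^3)) in Hc; [| intros n; rewrite S_INR; ring].
  apply (shift_rule (pois u) (pois u) u (fun m => INR m ^ 3) _ (pois_shift u)) in Hc.
  apply (ser_ext _ (fun m => pois u m * INR m ^ 4)) in Hc; [| intros; simpl; ring].
  match type of Hc with is_series _ ?V => match goal with |- is_series _ ?G => replace G with V end end.
  exact Hc. unfold P1, P2, P3, P4. ring.
Qed.

Lemma pois_poly : forall u c0 c1 c2 c3 c4,
  is_series (fun i => pois u i * (c0 + c1 * INR i + c2 * INR i ^ 2 + c3 * INR i ^ 3 + c4 * INR i ^ 4))
    (c0 + c1 * P1 u + c2 * P2 u + c3 * P3 u + c4 * P4 u).
Proof.
  intros. assert (Hc := comb5 _ _ _ _ _ _ c0 c1 c2 c3 c4 (pois_m0 u) (pois_m1 u) (pois_m2 u) (pois_m3 u) (pois_m4 u)).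
  match type of Hc with is_series _ ?V => match goal with |- is_series _ ?G => replace G with V by ring end end.
  exact Hc.
Qed.


Lemma sum_reindex : forall (f : nat -> nat -> R) N,
  sum_f_R0 (fun k => sum_f_R0 (fun i => f i (k - i)%nat) k) N =
  sum_f_R0 (fun i => sum_f_R0 (fun m => f i m) (N - i)) N.
Proof.
  intros f N. induction N as [|N IH].
  - simpl. reflexivity.
  - rewrite tech5, IH. rewrite tech5. rewrite Nat.sub_diag.
    rewrite tech5. rewrite Nat.sub_diag.
    change (sum_f_R0 (fun m => f (S N) m) 0) with (f (S N) 0%nat).
    assert (E : sum_f_R0 (fun i => sum_f_R0 (fun m => f i m) (S N - i)) N =
                sum_f_R0 (fun i => sum_f_R0 (fun m => f i m) (N - i)) N +
                sum_f_R0 (fun i => f i (S N - i)%nat) N).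
    { rewrite <- plus_sum. apply sum_eq. intros i Hi.
      replace (S N - i)%nat with (S (N - i)) by lia. rewrite tech5. reflexivity. }
    rewrite E. ring.
Qed.

Lemma sum_mono_N : forall (g : nat -> R) I N, (forall i, 0 <= g i) -> (I <= N)%nat ->
  sum_f_R0 g I <= sum_f_R0 g N.
Proof.
  intros g I N Hg HIN. induction HIN. lra. rewrite tech5. specialize (Hg (S m)). lra.
Qed.

Lemma sum_const_R : forall c N, sum_f_R0 (fun _ => c) N = INR (S N) * c.
Proof. intros. induction N. simpl; ring. rewrite tech5, IHN. rewrite (S_INR (S N)). ring. Qed.

Lemma tonelli : forall (a : nat -> nat -> R) (A : nat -> R) (L : R),
  (forall i m, 0 <= a i m) -> (forall i, is_series (a i) (A i)) -> is_series A L ->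
  is_series (fun k => sum_n (fun i => a i (k - i)%nat) k) L.
Proof.
  intros a A L Hpos HA HL.
  apply is_series_Reals. apply is_series_Reals in HL.
  assert (HA' : forall i, infinite_sum (a i) (A i)) by (intros; apply is_series_Reals; auto).
  assert (HAle : forall i n, sum_f_R0 (a i) n <= A i).
  { intros. apply sum_incr. apply HA'. intros; apply Hpos. }
  assert (HApos : forall i, 0 <= A i).
  { intros. apply Rle_trans with (sum_f_R0 (a i) 0). simpl; apply Hpos. apply HAle. }
  assert (HLle : forall n, sum_f_R0 A n <= L) by (intros; apply sum_incr; [apply HL| apply HApos]).
  set (Sp := fun N => sum_f_R0 (fun k => sum_n (fun i => a i (k - i)%nat) k) N).
  assert (HS : forall N, Sp N = sum_f_R0 (fun i => sum_f_R0 (a i) (N - i)) N).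
  { intros. unfold Sp. rewrite <- sum_reindex. apply sum_eq. intros. apply sum_n_Reals. }
  assert (Hup : forall N, Sp N <= L).
  { intros. rewrite HS. apply Rle_trans with (sum_f_R0 A N); auto.
    apply sum_Rle. intros; auto. }
  intros eps Heps.
  destruct (HL (eps/2)) as [I HI]. lra.
  specialize (HI I (le_n _)). unfold Rdist in HI.
  set (d := eps / 2 / INR (S I)).
  assert (Hd : 0 < d). { unfold d. apply Rdiv_lt_0_compat. lra. apply lt_0_INR; lia. }
  assert (HN0 : forall J, exists N0, forall i, (i <= J)%nat -> forall n, (n >= N0)%nat -> A i - d < sum_f_R0 (a i) n).
  { induction J as [|J IH].
    - destruct (HA' 0%nat d Hd) as [N0 HN0]. exists N0. intros i Hi n Hn.
      replace i with 0%nat by lia. specialize (HN0 n Hn). unfold Rdist in HN0.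
      apply Rabs_def2 in HN0. lra.
    - destruct IH as [N1 HN1]. destruct (HA' (S J) d Hd) as [N2 HN2].
      exists (max N1 N2). intros i Hi n Hn.
      destruct (Nat.eq_dec i (S J)) as [->|Hne].
      + specialize (HN2 n ltac:(lia)). unfold Rdist in HN2. apply Rabs_def2 in HN2. lra.
      + apply HN1; lia. }
  destruct (HN0 I) as [N0 HN].
  exists (I + N0)%nat. intros n Hn. unfold Rdist. fold (Sp n).
  assert (Hlow : sum_f_R0 A I - eps / 2 <= Sp n).
  { rewrite HS.
    apply Rle_trans with (sum_f_R0 (fun i => sum_f_R0 (a i) (n - i)) I).
    2:{ apply sum_mono_N. intros. apply cond_pos_sum. auto. lia. }
    apply Rle_trans with (sum_f_R0 (fun i => A i - d) I).
    { rewrite minus_sum, sum_const_R. unfold d. right. field. apply Rgt_not_eq, lt_0_INR; lia. }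
    apply sum_Rle. intros i Hi. left. apply HN. auto. lia. }
  specialize (Hup n). apply Rabs_def2 in HI. apply Rabs_def1; lra.
Qed.


Lemma sum_n_Rmult_l : forall (c : R) (f : nat -> R) n, c * sum_n f n = sum_n (fun k => c * f k) n.
Proof. intros. rewrite !sum_n_Reals. rewrite scal_sum. apply sum_eq. intros; ring. Qed.
Lemma sum_n_Rmult_r : forall (c : R) (f : nat -> R) n, sum_n f n * c = sum_n (fun k => f k * c) n.
Proof. intros. rewrite Rmult_comm, sum_n_Rmult_l. rewrite !sum_n_Reals. apply sum_eq. intros; ring. Qed.

Section K.
Variables alpha eta x : R.
Hypothesis Ha : -1 < alpha.
Hypothesis Hu : 0 <= eta * x.
Let u := eta * x / 2.
Let Hu' : 0 <= u.
Proof. unfold u. lra. Qed.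

Definition aa (i m : nat) : R :=
  pois (eta * x / 2) i * (Rpower 2 (- alpha - 1) / 2 ^ i) * nb (INR i + alpha) m.

Lemma aa_nonneg : forall i m, 0 <= aa i m.
Proof.
  intros. unfold aa. apply Rmult_le_pos. apply Rmult_le_pos.
  apply pois_nonneg. apply Hu'. apply Rdiv_le_0_compat. left; apply exp_pos. apply pow_lt; lra.
  left; apply nb_pos. assert (0 <= INR i) by apply pos_INR. lra.
Qed.

Lemma q_repr : forall k, p_eta alpha eta k x = sum_n (fun i => aa i (k - i)%nat) k.
Proof.
  intros k. unfold p_eta, laguerre. rewrite sum_n_Rmult_l.
  apply sum_n_ext_loc. intros i Hi.
  match goal with |- ?a = ?b => change (@eq R a b) end.
  unfold aa, pois, nb.
  replace (INR (k - i) + (INR i + alpha)) with (INR k + alpha) by (rewrite minus_INR by lia; ring).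
  replace (2 ^ k) with (2 ^ i * 2 ^ (k - i)) by (rewrite <- pow_add; f_equal; lia).
  replace ((-1) ^ i / INR (fact i) * gbinom (INR k + alpha) (k - i) * (- eta * x / 2) ^ i)
    with (((-1) * (- eta * x / 2)) ^ i / INR (fact i) * gbinom (INR k + alpha) (k - i))
    by (rewrite Rpow_mult_distr; field; apply INR_fact_neq_0).
  replace ((-1) * (- eta * x / 2)) with (eta * x / 2) by field.
  replace (- eta * x / 2) with (- (eta * x / 2)) by field.
  field. repeat split; try apply INR_fact_neq_0; apply pow_nonzero; lra.
Qed.

Lemma q_nonneg : forall k, 0 <= p_eta alpha eta k x.
Proof.
  intros. rewrite q_repr. rewrite sum_n_Reals. apply cond_pos_sum. intros; apply aa_nonneg.
Qed.

Lemma R2inv : forall i, Rpower 2 (- alpha - 1) / 2 ^ i * Rpower 2 (INR i + alpha + 1) = 1.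
Proof.
  intros. replace (INR i + alpha + 1) with (INR i + - (- alpha - 1)) by ring.
  rewrite Rpower_plus, Rpower_Ropp, Rpower_pow by lra.
  assert (0 < Rpower 2 (- alpha - 1)) by apply exp_pos.
  assert (0 < 2 ^ i) by (apply pow_lt; lra). field. lra.
Qed.

Lemma inner : forall i c0 c1 c2 c3 c4,
  is_series (fun m => aa i m * (c0 + c1 * INR m + c2 * INR m ^ 2 + c3 * INR m ^ 3 + c4 * INR m ^ 4))
   (pois u i * (c0 + c1 * n1 (INR i + alpha) + c2 * n2 (INR i + alpha) + c3 * n3 (INR i + alpha) + c4 * n4 (INR i + alpha))).
Proof.
  intros. assert (Hb : -1 < INR i + alpha) by (assert (0 <= INR i) by apply pos_INR; lra).
  assert (H := ser_sc _ _ (pois u i * (Rpower 2 (- alpha - 1) / 2 ^ i)) (nb_poly _ c0 c1 c2 c3 c4 Hb)).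
  eapply ser_ext in H. 2:{ intros m. unfold aa. fold u. instantiate (1 := fun m => aa i m * (c0 + c1 * INR m + c2 * INR m ^ 2 + c3 * INR m ^ 3 + c4 * INR m ^ 4)). simpl. unfold aa. fold u. ring. }
  match type of H with is_series _ ?V => match goal with |- is_series _ ?G => replace G with V end end.
  exact H.
  transitivity (pois u i * (Rpower 2 (- alpha - 1) / 2 ^ i * Rpower 2 (INR i + alpha + 1)) *
    (c0 + c1 * n1 (INR i + alpha) + c2 * n2 (INR i + alpha) + c3 * n3 (INR i + alpha) + c4 * n4 (INR i + alpha))).
  ring. rewrite R2inv. ring.
Qed.

Definition K0 := 1.
Definition K1 u := 1 + alpha + 2*u.
Definition K2 u := 3 + 4*alpha + alpha^2 + 10*u + 4*u*alpha + 4*u^2.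
Definition K3 u := 13 + 21*alpha + 9*alpha^2 + alpha^3 + 62*u + 42*u*alpha + 6*u*alpha^2 + 48*u^2 + 12*u^2*alpha + 8*u^3.
Definition K4 u := 75 + 138*alpha + 78*alpha^2 + 16*alpha^3 + alpha^4 + 466*u + 416*u*alpha + 108*u*alpha^2 + 8*u*alpha^3 + 532*u^2 + 240*u^2*alpha + 24*u^2*alpha^2 + 176*u^3 + 32*u^3*alpha + 16*u^4.

Lemma Kmom_gen : forall (j : nat) (e0 e1 e2 e3 e4 : R) (V : R),
  (forall i, is_series (fun m => aa i m * (INR i + INR m) ^ j)
              (pois u i * (e0 + e1 * INR i + e2 * INR i ^ 2 + e3 * INR i ^ 3 + e4 * INR i ^ 4))) ->
  e0 + e1 * P1 u + e2 * P2 u + e3 * P3 u + e4 * P4 u = V ->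
  is_series (fun k => p_eta alpha eta k x * INR k ^ j) V.
Proof.
  intros j e0 e1 e2 e3 e4 V Hin HV.
  assert (H := tonelli (fun i m => aa i m * (INR i + INR m) ^ j) _ _
     (fun i m => Rmult_le_pos _ _ (aa_nonneg i m) (pow_le _ _ (Rplus_le_le_0_compat _ _ (pos_INR _) (pos_INR _))))
     Hin (pois_poly u e0 e1 e2 e3 e4)).
  rewrite HV in H. eapply ser_ext; [|exact H]. intros k. simpl.
  rewrite q_repr. rewrite sum_n_Rmult_r. apply sum_n_ext_loc. intros i Hi.
  match goal with |- ?a = ?b => change (@eq R a b) end.
  rewrite minus_INR by lia. replace (INR i + (INR k - INR i)) with (INR k) by ring. reflexivity.
Qed.

Lemma Kmom0 : is_series (fun k => p_eta alpha eta k x * INR k ^ 0) (K0).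
Proof.
  apply (Kmom_gen 0 (1) (0) (0) (0) (0)).
  - intros i. assert (H := inner i (1 * INR i ^ 0) (0) (0) (0) (0)).
    match type of H with is_series _ ?V => match goal with |- is_series _ ?G => replace G with V by (unfold n1, n2, n3, n4; ring) end end.
    eapply ser_ext; [|exact H]. intros m. simpl. ring.
  - unfold P1, P2, P3, P4, K0, K1, K2, K3, K4. ring.
Qed.

Lemma Kmom1 : is_series (fun k => p_eta alpha eta k x * INR k ^ 1) (K1 u).
Proof.
  apply (Kmom_gen 1 (1 + alpha) (2) (0) (0) (0)).
  - intros i. assert (H := inner i (1 * INR i ^ 1) (1 * INR i ^ 0) (0) (0) (0)).
    match type of H with is_series _ ?V => match goal with |- is_series _ ?G => replace G with V by (unfold n1, n2, n3, n4; ring) end end.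
    eapply ser_ext; [|exact H]. intros m. simpl. ring.
  - unfold P1, P2, P3, P4, K0, K1, K2, K3, K4. ring.
Qed.

Lemma Kmom2 : is_series (fun k => p_eta alpha eta k x * INR k ^ 2) (K2 u).
Proof.
  apply (Kmom_gen 2 (3 + 4*alpha + alpha^2) (6 + 4*alpha) (4) (0) (0)).
  - intros i. assert (H := inner i (1 * INR i ^ 2) (2 * INR i ^ 1) (1 * INR i ^ 0) (0) (0)).
    match type of H with is_series _ ?V => match goal with |- is_series _ ?G => replace G with V by (unfold n1, n2, n3, n4; ring) end end.
    eapply ser_ext; [|exact H]. intros m. simpl. ring.
  - unfold P1, P2, P3, P4, K0, K1, K2, K3, K4. ring.
Qed.

Lemma Kmom3 : is_series (fun k => p_eta alpha eta k x * INR k ^ 3) (K3 u).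
Proof.
  apply (Kmom_gen 3 (13 + 21*alpha + 9*alpha^2 + alpha^3) (30 + 30*alpha + 6*alpha^2) (24 + 12*alpha) (8) (0)).
  - intros i. assert (H := inner i (1 * INR i ^ 3) (3 * INR i ^ 2) (3 * INR i ^ 1) (1 * INR i ^ 0) (0)).
    match type of H with is_series _ ?V => match goal with |- is_series _ ?G => replace G with V by (unfold n1, n2, n3, n4; ring) end end.
    eapply ser_ext; [|exact H]. intros m. simpl. ring.
  - unfold P1, P2, P3, P4, K0, K1, K2, K3, K4. ring.
Qed.

Lemma Kmom4 : is_series (fun k => p_eta alpha eta k x * INR k ^ 4) (K4 u).
Proof.
  apply (Kmom_gen 4 (75 + 138*alpha + 78*alpha^2 + 16*alpha^3 + alpha^4) (190 + 240*alpha + 84*alpha^2 + 8*alpha^3) (180 + 144*alpha + 24*alpha^2) (80 + 32*alpha) (16)).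
  - intros i. assert (H := inner i (1 * INR i ^ 4) (4 * INR i ^ 3) (6 * INR i ^ 2) (4 * INR i ^ 1) (1 * INR i ^ 0)).
    match type of H with is_series _ ?V => match goal with |- is_series _ ?G => replace G with V by (unfold n1, n2, n3, n4; ring) end end.
    eapply ser_ext; [|exact H]. intros m. simpl. ring.
  - unfold P1, P2, P3, P4, K0, K1, K2, K3, K4. ring.
Qed.

Lemma Kpoly : forall d0 d1 d2 d3 d4,
  is_series (fun k => p_eta alpha eta k x * (d0 + d1 * INR k + d2 * INR k ^ 2 + d3 * INR k ^ 3 + d4 * INR k ^ 4))
    (d0 * K0 + d1 * K1 u + d2 * K2 u + d3 * K3 u + d4 * K4 u).
Proof.
  intros. exact (comb5 _ _ _ _ _ _ d0 d1 d2 d3 d4 Kmom0 Kmom1 Kmom2 Kmom3 Kmom4).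
Qed.
End K.


Notation F0 := (at_right 0).
Notation Finf := (Rbar_locally p_infty).

Lemma ball_R : forall (x e y : R), ball x e y <-> Rabs (y - x) < e.
Proof. intros. unfold ball; simpl. unfold AbsRing_ball, abs, minus, plus, opp; simpl. tauto. Qed.

Lemma RInt_mono_pos : forall f a b a' b', (forall t, 0 < t -> 0 <= f t) ->
  (forall a b, 0 < a -> a <= b -> ex_RInt f a b) ->
  0 < a' -> a' <= a -> a <= b -> b <= b' -> RInt f a b <= RInt f a' b'.
Proof.
  intros f a b a' b' Hf Hex Ha' H1 H2 H3.
  rewrite <- (RInt_Chasles f a' a b') by (apply Hex; lra).
  rewrite <- (RInt_Chasles f a b b') by (apply Hex; lra).
  unfold plus; simpl.
  assert (0 <= RInt f a' a) by (apply RInt_ge_0; [lra|apply Hex; lra|intros; apply Hf; lra]).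
  assert (0 <= RInt f b b') by (apply RInt_ge_0; [lra|apply Hex; lra|intros; apply Hf; lra]).
  lra.
Qed.

Lemma gen_nonneg : forall (f : R -> R) (C : R),
  (forall t, 0 < t -> 0 <= f t) ->
  (forall a b, 0 < a -> a <= b -> ex_RInt f a b) ->
  (forall a b, 0 < a -> a <= b -> RInt f a b <= C) ->
  exists L, is_RInt_gen f F0 Finf L /\ (forall a b, 0 < a -> a <= b -> RInt f a b <= L).
Proof.
  intros f C Hf Hex HC.
  set (E := fun y => exists a b, 0 < a /\ a <= b /\ y = RInt f a b).
  destruct (completeness E) as [L [HLub HLleast]].
  - exists C. intros y [a [b [Ha [Hab ->]]]]. auto.
  - exists (RInt f 1 1). exists 1, 1. repeat split; lra.
  - exists L. split.
    2:{ intros a b Ha Hab. apply HLub. exists a, b. auto. }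
    intros P [eps HP].
    assert (Hex0 : exists a0 b0, 0 < a0 /\ a0 <= b0 /\ L - eps < RInt f a0 b0).
    { destruct (Rlt_or_le (L - eps) L) as [_|?]; [|destruct eps; simpl in *; lra].
      apply Classical_Prop.NNPP. intros Hn.
      assert (L <= L - eps). { apply HLleast. intros y [a [b [Ha [Hab ->]]]].
        apply Rnot_lt_le. intros Hlt. apply Hn. exists a, b. auto. }
      destruct eps; simpl in *; lra. }
    destruct Hex0 as [a0 [b0 [Ha0 [Hab0 Hlt]]]].
    apply Filter_prod with (fun a => 0 < a < a0) (fun b => b0 < b).
    + assert (0 < a0) by auto. exists (mkposreal a0 ltac:(auto)). intros y Hy Hy0.
      assert (Hy2 := proj1 (ball_R _ _ _) Hy). simpl in Hy2. rewrite Rminus_0_r in Hy2. apply Rabs_def2 in Hy2. lra.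
    + exists b0. auto.
    + intros a b Ha Hb. simpl. exists (RInt f a b). split.
      exact (RInt_correct f a b (Hex a b ltac:(lra) ltac:(lra))).
      apply HP. apply ball_R.
      assert (RInt f a b <= L) by (apply HLub; exists a, b; repeat split; lra).
      assert (RInt f a0 b0 <= RInt f a b) by (apply RInt_mono_pos; auto; lra).
      apply Rabs_def1; lra.
Qed.

Lemma gen_ge_partial : forall (g : R -> R) (Lg : R),
  (forall t, 0 < t -> 0 <= g t) ->
  (forall a b, 0 < a -> a <= b -> ex_RInt g a b) ->
  is_RInt_gen g F0 Finf Lg ->
  forall a b, 0 < a -> a <= b -> RInt g a b <= Lg.
Proof.
  intros g Lg Hg Hex HL a b Ha Hab.
  apply Rnot_lt_le. intros Hlt.
  set (eps := RInt g a b - Lg).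
  assert (Heps : 0 < eps) by (unfold eps; lra).
  specialize (HL (ball Lg (mkposreal eps Heps))).
  destruct HL as [Q R HQ HR HQR].
  { exists (mkposreal eps Heps). auto. }
  destruct HQ as [d Hd]. destruct HR as [M HM].
  set (a' := Rmin a (d / 2)).
  assert (Ha' : 0 < a' <= a). { unfold a'. split. apply Rmin_glb_lt; destruct d; simpl; lra. apply Rmin_l. }
  assert (HQa : Q a').
  { apply Hd. apply ball_R. rewrite Rminus_0_r. rewrite Rabs_pos_eq by lra.
    apply Rle_lt_trans with (d/2). apply Rmin_r. destruct d; simpl; lra. lra. }
  set (b' := Rmax b M + 1).
  assert (HRb : R b') by (apply HM; unfold b'; assert (M <= Rmax b M) by apply Rmax_r; lra).
  destruct (HQR a' b' HQa HRb) as [y [Hy Hb]]. simpl in Hy.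
  assert (Hb2 := proj1 (ball_R _ _ _) Hb). simpl in Hb2.
  assert (Hb' : b <= b') by (unfold b'; assert (b <= Rmax b M) by apply Rmax_l; lra).
  assert (y = RInt g a' b') by (symmetry; apply is_RInt_unique; auto).
  assert (RInt g a b <= RInt g a' b') by (apply RInt_mono_pos; auto; lra).
  apply Rabs_def2 in Hb2. unfold eps in Hb2. lra.
Qed.

Lemma gen_dom : forall (f g : R -> R) (Lg : R),
  (forall a b, 0 < a -> a <= b -> ex_RInt f a b) ->
  (forall a b, 0 < a -> a <= b -> ex_RInt g a b) ->
  (forall t, 0 < t -> Rabs (f t) <= g t) ->
  is_RInt_gen g F0 Finf Lg ->
  ex_RInt_gen f F0 Finf.
Proof.
  intros f g Lg Hf Hg Hfg HL.
  assert (Hgpos : forall t, 0 < t -> 0 <= g t) by (intros t Ht; specialize (Hfg t Ht); assert (0 <= Rabs (f t)) by apply Rabs_pos; lra).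
  destruct (gen_nonneg (fun t => f t + g t) (2 * Lg)) as [Lh [Hh _]].
  - intros t Ht. specialize (Hfg t Ht). apply Rabs_le_between in Hfg. lra.
  - intros. apply (ex_RInt_plus f g); auto.
  - intros a b Ha Hab.
    assert (E : RInt (fun t => f t + g t) a b = RInt f a b + RInt g a b)
      by (exact (RInt_plus f g a b (Hf a b Ha Hab) (Hg a b Ha Hab))).
    rewrite E.
    assert (RInt f a b <= RInt g a b).
    { apply RInt_le; auto. intros t Ht. specialize (Hfg t ltac:(lra)). apply Rabs_le_between in Hfg. lra. }
    assert (RInt g a b <= Lg) by (apply (gen_ge_partial g); auto).
    lra.
  - exists (minus Lh Lg).
    assert (H := is_RInt_gen_minus _ _ _ _ Hh HL).
    eapply is_RInt_gen_ext; [|exact H].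
    apply Filter_prod with (fun _ => True) (fun _ => True).
    apply filter_true. apply filter_true.
    intros; simpl. unfold minus, plus, opp; simpl. ring.
Qed.


Lemma exp_le : forall x y, x <= y -> exp x <= exp y.
Proof. intros. destruct H. left; apply exp_increasing; auto. subst; lra. Qed.

Definition gi (s t : R) := Rpower t (s - 1) * exp (- t).

Lemma gi_pos : forall s t, 0 <= gi s t.
Proof. intros. unfold gi, Rpower. apply Rmult_le_pos; left; apply exp_pos. Qed.

Lemma exd_cont : forall (f : R -> R) x, ex_derive f x -> continuous f x.
Proof. intros. apply (ex_derive_continuous (K := R_AbsRing) (V := R_NormedModule)). auto. Qed.

Lemma exR_cont : forall (f : R -> R) a b, (forall z, Rmin a b <= z <= Rmax a b -> continuous f z) -> ex_RInt f a b.
Proof. intros. apply (ex_RInt_continuous (V := R_CompleteNormedModule)). auto. Qed.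

Lemma gi_cont : forall s t, 0 < t -> continuous (gi s) t.
Proof. intros. apply exd_cont. unfold gi, Rpower. auto_derive. lra. Qed.

Lemma gi_ex : forall s a b, 0 < a -> a <= b -> ex_RInt (gi s) a b.
Proof.
  intros. apply exR_cont. intros z Hz. rewrite Rmin_left in Hz by lra. apply gi_cont. lra.
Qed.

Lemma pow_exp_bound : forall r, exists K, 0 < K /\ forall t, 1 <= t -> Rpower t r <= K * exp (t / 2).
Proof.
  intros r. destruct (archimed r) as [Hup _].
  set (N := Z.to_nat (up r)).
  assert (HN : r <= INR N).
  { unfold N. destruct (Z.le_gt_cases 0 (up r)) as [Hz|Hz].
    rewrite INR_IZR_INZ, Z2Nat.id by auto. lra.
    assert (IZR (up r) < 0) by (apply IZR_lt; lia). replace (Z.to_nat (up r)) with 0%nat by lia. simpl. lra. }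
  exists (INR (fact N) * 2 ^ N). split.
  { apply Rmult_lt_0_compat. apply lt_0_INR, lt_O_fact. apply pow_lt; lra. }
  intros t Ht.
  apply Rle_trans with (Rpower t (INR N)). apply Rle_Rpower; auto.
  rewrite Rpower_pow by lra.
  assert (H := exp_ge_taylor (t/2) N ltac:(lra)).
  assert (H2 : (t/2)^N / INR (fact N) <= sum_f_R0 (fun k => (t/2)^k / INR (fact k)) N).
  { destruct N. simpl. lra. rewrite tech5.
    assert (0 <= sum_f_R0 (fun k => (t/2)^k / INR (fact k)) N).
    { apply cond_pos_sum. intros. apply Rdiv_le_0_compat. apply pow_le; lra. apply lt_0_INR, lt_O_fact. }
    lra. }
  assert (E : t ^ N = INR (fact N) * 2 ^ N * ((t/2)^N / INR (fact N))).
  { replace (t / 2) with (t * / 2) by reflexivity. rewrite Rpow_mult_distr, pow_inv. field. split. apply pow_nonzero; lra. apply INR_fact_neq_0. }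
  rewrite E. apply Rmult_le_compat_l. apply Rmult_le_pos. apply pos_INR. apply pow_le; lra. lra.
Qed.

Lemma gi_int01 : forall s a, 0 < s -> 0 < a <= 1 -> RInt (gi s) a 1 <= 1 / s.
Proof.
  intros s a Hs Ha.
  assert (Hd : is_RInt (fun t => exp ((s - 1) * ln t)) a 1 (minus (exp (s * ln 1) / s) (exp (s * ln a) / s))).
  { apply (is_RInt_derive (fun t => exp (s * ln t) / s)).
    - intros x Hx. rewrite Rmin_left, Rmax_right in Hx by lra.
      auto_derive. lra.
      replace (s - 1) with (s + -1) by ring. rewrite Rmult_plus_distr_r, exp_plus.
      replace (-1 * ln x) with (- ln x) by ring. rewrite exp_Ropp, exp_ln by lra. field. lra.
    - intros x Hx. rewrite Rmin_left, Rmax_right in Hx by lra.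
      apply exd_cont. auto_derive. lra. }
  apply Rle_trans with (RInt (fun t => exp ((s - 1) * ln t)) a 1).
  - apply RInt_le. lra. apply gi_ex; lra. eexists; exact Hd.
    intros t Ht. unfold gi, Rpower. rewrite <- (Rmult_1_r (exp ((s - 1) * ln t))) at 2.
    apply Rmult_le_compat_l. left; apply exp_pos. rewrite <- exp_0. apply exp_le_3 || (apply exp_increasing_le || idtac).
    left. apply exp_increasing. lra.
  - rewrite (is_RInt_unique _ _ _ _ Hd). unfold minus, plus, opp; simpl.
    rewrite ln_1, Rmult_0_r, exp_0. assert (0 < exp (s * ln a)) by apply exp_pos.
    apply Rle_trans with (1/s - exp (s * ln a) / s). right; field; lra.
    assert (0 < exp (s * ln a) / s) by (apply Rdiv_lt_0_compat; lra). lra.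
Qed.

Lemma gi_int1b : forall s, exists C, forall b, 1 <= b -> RInt (gi s) 1 b <= C.
Proof.
  intros s. destruct (pow_exp_bound (s - 1)) as [K [HK HKb]].
  exists (2 * K). intros b Hb.
  assert (Hd : is_RInt (fun t => K * exp (- t / 2)) 1 b (minus (-2 * K * exp (- b / 2)) (-2 * K * exp (- 1 / 2)))).
  { apply (is_RInt_derive (fun t => -2 * K * exp (- t / 2))).
    - intros x Hx. auto_derive. auto. change (- x * / 2) with (- x / 2). field.
    - intros x Hx. apply exd_cont. auto_derive. auto. }
  apply Rle_trans with (RInt (fun t => K * exp (- t / 2)) 1 b).
  - apply RInt_le. lra. apply gi_ex; lra. eexists; exact Hd.
    intros t Ht. unfold gi.
    assert (E : K * exp (- t / 2) = K * exp (t / 2) * exp (- t)).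
    { rewrite Rmult_assoc, <- exp_plus. f_equal. f_equal. field. }
    rewrite E. apply Rmult_le_compat_r. left; apply exp_pos. apply HKb. lra.
  - rewrite (is_RInt_unique _ _ _ _ Hd). unfold minus, plus, opp; simpl.
    assert (0 < exp (- b / 2)) by apply exp_pos.
    assert (exp (- 1 / 2) <= 1). { rewrite <- exp_0. destruct (Req_dec (-1/2) 0). lra. left. apply exp_increasing. lra. }
    nra.
Qed.

Lemma gi_bound : forall s, 0 < s -> exists C, forall a b, 0 < a -> a <= b -> RInt (gi s) a b <= C.
Proof.
  intros s Hs. destruct (gi_int1b s) as [C HC].
  exists (1 / s + C). intros a b Ha Hab.
  set (a' := Rmin a 1). set (b' := Rmax b 1).
  assert (Ha' : 0 < a' <= 1 /\ a' <= a). { unfold a'. split. split. apply Rmin_glb_lt; lra. apply Rmin_r. apply Rmin_l. }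
  assert (Hb' : 1 <= b' /\ b <= b'). { unfold b'. split. apply Rmax_r. apply Rmax_l. }
  apply Rle_trans with (RInt (gi s) a' b').
  apply RInt_mono_pos; try lra. intros; apply gi_pos. intros; apply gi_ex; auto.
  rewrite <- (RInt_Chasles (gi s) a' 1 b') by (apply gi_ex; lra).
  unfold plus; simpl.
  assert (RInt (gi s) a' 1 <= 1 / s) by (apply gi_int01; lra).
  assert (RInt (gi s) 1 b' <= C) by (apply HC; lra).
  lra.
Qed.

Lemma gi_12_pos : forall s, 0 < RInt (gi s) 1 2.
Proof.
  intros s. set (m := exp (- (Rabs (s - 1) * ln 2)) * exp (- 2)).
  assert (Hm : 0 < m) by (unfold m; apply Rmult_lt_0_compat; apply exp_pos).
  apply Rlt_le_trans with (RInt (fun _ => m) 1 2).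
  { rewrite RInt_const. unfold scal; simpl; unfold mult; simpl. lra. }
  apply RInt_le. lra. apply ex_RInt_const. apply gi_ex; lra.
  intros t Ht. unfold m, gi, Rpower. apply Rmult_le_compat.
  left; apply exp_pos. left; apply exp_pos.
  - assert (0 < ln t) by (rewrite <- ln_1; apply ln_increasing; lra).
    assert (ln t < ln 2) by (apply ln_increasing; lra).
    apply exp_le.
    destruct (Rle_or_lt 0 (s - 1)).
    + rewrite Rabs_pos_eq by lra. nra.
    + rewrite Rabs_left by lra. nra.
  - left. apply exp_increasing. lra.
Qed.

Lemma Gamma_spec : forall s, 0 < s -> is_RInt_gen (gi s) F0 Finf (Gamma s) /\ 0 < Gamma s.
Proof.
  intros s Hs. destruct (gi_bound s Hs) as [C HC].
  destruct (gen_nonneg (gi s) C) as [L [HL HLb]].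
  intros; apply gi_pos. intros; apply gi_ex; auto. auto.
  assert (E : Gamma s = L).
  { unfold Gamma. apply (is_RInt_gen_unique (gi s) L HL). }
  rewrite E. split. auto. apply Rlt_le_trans with (RInt (gi s) 1 2). apply gi_12_pos. apply HLb; lra.
Qed.


Section IBP.
Variable r : R.
Hypothesis Hr : 0 < r.
Let F := fun t => - (exp (r * ln t) * exp (- t)).
Let G := fun t => exp (r * ln t) * exp (- t) - r * (exp ((r - 1) * ln t) * exp (- t)).

Lemma F_der : forall t, 0 < t -> is_derive F t (G t).
Proof.
  intros t Ht. unfold F, G. auto_derive. lra.
  replace (r - 1) with (r + -1) by ring. rewrite Rmult_plus_distr_r, exp_plus.
  replace (-1 * ln t) with (- ln t) by ring. rewrite (exp_Ropp (ln t)), exp_ln by lra. field. repeat split; try lra; apply Rgt_not_eq, exp_pos.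
Qed.

Lemma F_lim0 : filterlim F F0 (locally 0).
Proof.
  apply (filterlim_locally (F := F0)). intros eps.
  set (d := exp (ln eps / r)).
  assert (Hd : 0 < d) by apply exp_pos.
  exists (mkposreal d Hd). intros t Ht Htp.
  assert (Ht2 := proj1 (ball_R _ _ _) Ht). simpl in Ht2. rewrite Rminus_0_r, Rabs_pos_eq in Ht2 by lra.
  apply ball_R. unfold F. rewrite Rminus_0_r, Rabs_Ropp, Rabs_pos_eq.
  2: { apply Rmult_le_pos; left; apply exp_pos. }
  assert (exp (- t) <= 1) by (rewrite <- exp_0; apply exp_le; lra).
  assert (r * ln t < ln eps).
  { assert (ln t < ln eps / r). { unfold d in Ht2. rewrite <- (ln_exp (ln eps / r)). apply ln_increasing; auto. }
    apply Rmult_lt_compat_l with (r := r) in H0; auto. replace (r * (ln eps / r)) with (ln eps) in H0 by (field; lra). auto. }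
  assert (exp (r * ln t) < eps).
  { rewrite <- (exp_ln eps) by (destruct eps; simpl; lra). apply exp_increasing; auto. }
  assert (0 < exp (r * ln t)) by apply exp_pos.
  assert (0 < exp (- t)) by apply exp_pos.
  nra.
Qed.

Lemma F_liminf : filterlim F Finf (locally 0).
Proof.
  apply (filterlim_locally (F := Finf)). intros eps.
  destruct (pow_exp_bound r) as [K [HK HKb]].
  exists (Rmax 1 (2 * K / eps)). intros t Ht.
  assert (Ht1 : 1 < t) by (apply Rle_lt_trans with (Rmax 1 (2 * K / eps)); [apply Rmax_l|auto]).
  assert (Ht2 : 2 * K / eps < t) by (apply Rle_lt_trans with (Rmax 1 (2 * K / eps)); [apply Rmax_r|auto]).
  apply ball_R. unfold F. rewrite Rminus_0_r, Rabs_Ropp, Rabs_pos_eq.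
  2: { apply Rmult_le_pos; left; apply exp_pos. }
  assert (H1 := HKb t ltac:(lra)). unfold Rpower in H1.
  assert (Hexp : t / 2 < exp (t / 2)) by (assert (H := exp_ineq1_le (t/2)); lra).
  assert (E : exp (- t) = / exp (t / 2) * / exp (t / 2)).
  { rewrite <- !exp_Ropp, <- exp_plus. f_equal. field. }
  assert (0 < exp (t / 2)) by apply exp_pos.
  apply Rle_lt_trans with (K * exp (t / 2) * exp (- t)).
  apply Rmult_le_compat_r. left; apply exp_pos. auto.
  rewrite E. replace (K * exp (t / 2) * (/ exp (t / 2) * / exp (t / 2))) with (K / exp (t / 2)) by (field; lra).
  assert (Heps : 0 < eps) by (destruct eps; auto).
  apply Rlt_trans with (K / (t / 2)).
  { apply Rmult_lt_compat_l; auto. apply Rinv_lt_contravar. nra. auto. }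
  apply Rmult_lt_reg_r with (t / 2). lra.
  replace (K / (t / 2) * (t / 2)) with K by (field; lra).
  apply Rmult_lt_reg_r with (/ eps). apply Rinv_0_lt_compat; auto.
  replace (eps * (t / 2) * / eps) with (t / 2) by (field; lra).
  unfold Rdiv in Ht2. lra.
Qed.

Lemma Gamma_rec : Gamma (r + 1) = r * Gamma r.
Proof.
  destruct (Gamma_spec r Hr) as [H1 _].
  destruct (Gamma_spec (r + 1) ltac:(lra)) as [H2 _].
  assert (HD : is_RInt_gen (Derive F) F0 Finf (0 - 0)).
  { apply is_RInt_gen_Derive.
    - apply Filter_prod with (fun a => 0 < a) (fun b => 0 < b).
      exists (mkposreal 1 Rlt_0_1). intros; auto. exists 0. auto.
      intros a b Ha Hb x Hx. simpl in Hx. exists (G x). apply F_der.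
      assert (0 < Rmin a b) by (apply Rmin_glb_lt; auto). lra.
    - apply Filter_prod with (fun a => 0 < a) (fun b => 0 < b).
      exists (mkposreal 1 Rlt_0_1). intros; auto. exists 0. auto.
      intros a b Ha Hb x Hx. simpl in Hx.
      assert (Hx0 : 0 < x) by (assert (0 < Rmin a b) by (apply Rmin_glb_lt; auto); lra).
      apply (continuous_ext_loc _ G).
      + exists (mkposreal x Hx0). intros y Hy. assert (Hy2 := proj1 (ball_R _ _ _) Hy). simpl in Hy2.
        symmetry. apply is_derive_unique. apply F_der. apply Rabs_def2 in Hy2. lra.
      + apply exd_cont. unfold G. auto_derive. lra.
    - apply F_lim0.
    - apply F_liminf. }
  assert (HM := is_RInt_gen_minus _ _ _ _ H2 (is_RInt_gen_scal _ r _ H1)).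
  assert (HD' : is_RInt_gen (fun t => minus (gi (r + 1) t) (scal r (gi r t))) F0 Finf (0 - 0)).
  { eapply is_RInt_gen_ext; [|exact HD].
    apply Filter_prod with (fun a => 0 < a) (fun b => 0 < b).
    exists (mkposreal 1 Rlt_0_1). intros; auto. exists 0. auto.
    intros a b Ha Hb x Hx. simpl in Hx.
    assert (Hx0 : 0 < x) by (assert (0 < Rmin a b) by (apply Rmin_glb_lt; auto); lra).
    rewrite (is_derive_unique _ _ _ (F_der x Hx0)). unfold G, gi, Rpower, minus, plus, opp, scal; simpl. unfold mult; simpl.
    replace (r + 1 - 1) with r by ring. ring. }
  assert (E := eq_trans (eq_sym (is_RInt_gen_unique _ _ HM)) (is_RInt_gen_unique _ _ HD')).
  unfold minus, plus, opp, scal in E; simpl in E; unfold mult in E; simpl in E. lra.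
Qed.
End IBP.


Lemma gen_subst : forall (g : R -> R) (L c : R), 0 < c ->
  is_RInt_gen g F0 Finf L -> is_RInt_gen (fun z => c * g (c * z)) F0 Finf L.
Proof.
  intros g L c Hc H P HP.
  destruct (H P HP) as [Q R HQ HR HQR].
  apply Filter_prod with (fun a => Q (c * a)) (fun b => R (c * b)).
  - destruct HQ as [eps He]. exists (mkposreal (eps / c) ltac:(apply Rdiv_lt_0_compat; [destruct eps|]; auto)).
    intros y Hy Hy0. apply He. 2: nra.
    assert (Hy2 := proj1 (ball_R _ _ _) Hy). simpl in Hy2. apply ball_R. rewrite Rminus_0_r in *.
    rewrite Rabs_mult, (Rabs_pos_eq c) by lra.
    apply Rmult_lt_reg_r with (/ c). apply Rinv_0_lt_compat; auto.
    replace (c * Rabs y * / c) with (Rabs y) by (field; lra). auto.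
  - destruct HR as [M HM]. exists (M / c). intros x Hx. apply HM.
    apply Rmult_lt_reg_r with (/ c). apply Rinv_0_lt_compat; auto.
    replace (c * x * / c) with x by (field; lra). auto.
  - intros a b Ha Hb. destruct (HQR _ _ Ha Hb) as [y [Hy Py]]. exists y. split; auto.
    simpl in Hy |- *.
    assert (Hy' : is_RInt g (c * a + 0) (c * b + 0) y) by (rewrite !Rplus_0_r; auto).
    apply is_RInt_comp_lin in Hy'.
    eapply is_RInt_ext; [|exact Hy']. intros x _. simpl. rewrite Rplus_0_r. reflexivity.
Qed.

Lemma gen_ext_pos : forall (f g : R -> R) (L : R), (forall z, 0 < z -> f z = g z) ->
  is_RInt_gen f F0 Finf L -> is_RInt_gen g F0 Finf L.
Proof.
  intros f g L Hfg H. eapply is_RInt_gen_ext; [|exact H].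
  apply Filter_prod with (fun a => 0 < a) (fun b => 0 < b).
  exists (mkposreal 1 Rlt_0_1). intros; auto. exists 0. auto.
  intros a b Ha Hb x Hx. simpl in Hx. apply Hfg.
  assert (0 < Rmin a b) by (apply Rmin_glb_lt; auto). lra.
Qed.

Lemma gen_plus : forall (f g : R -> R) lf lg, is_RInt_gen f F0 Finf lf -> is_RInt_gen g F0 Finf lg ->
  is_RInt_gen (fun z => f z + g z) F0 Finf (lf + lg).
Proof. intros. apply (is_RInt_gen_plus _ _ _ _ H H0). Qed.
Lemma gen_scal : forall (f : R -> R) lf k, is_RInt_gen f F0 Finf lf ->
  is_RInt_gen (fun z => k * f z) F0 Finf (k * lf).
Proof. intros. apply (is_RInt_gen_scal _ k _ H). Qed.
Lemma gen_minus : forall (f g : R -> R) lf lg, is_RInt_gen f F0 Finf lf -> is_RInt_gen g F0 Finf lg ->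
  is_RInt_gen (fun z => f z - g z) F0 Finf (lf - lg).
Proof. intros. apply (is_RInt_gen_minus _ _ _ _ H H0). Qed.
Lemma gen_uniq : forall (f : R -> R) l1 l2, is_RInt_gen f F0 Finf l1 -> is_RInt_gen f F0 Finf l2 -> l1 = l2.
Proof. intros. rewrite <- (is_RInt_gen_unique _ _ H), <- (is_RInt_gen_unique _ _ H0). reflexivity. Qed.

Section Ik.
Variables beta eta : R.
Variable k : nat.
Hypothesis Hb : 0 < beta.
Hypothesis He : 0 < eta.
Hypothesis Hk : (1 <= k)%nat.
Let c := eta * beta.
Let s := INR k * beta.
Let Hc : 0 < c. Proof. unfold c; nra. Qed.
Let Hs : 0 < s. Proof. unfold s. assert (1 <= INR k) by (apply (le_INR 1); auto). nra. Qed.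

Lemma Ik_mom : forall j : nat, is_RInt_gen (fun z => I_ker beta eta k z * z ^ j) F0 Finf
   (Gamma (s + INR j) / (Gamma s * c ^ j)).
Proof.
  intros j.
  assert (Hj : 0 < s + INR j) by (assert (0 <= INR j) by apply pos_INR; lra).
  destruct (Gamma_spec _ Hj) as [HG _].
  destruct (Gamma_spec _ Hs) as [_ HGs].
  assert (H := gen_scal _ _ (/ (Gamma s * c ^ j)) (gen_subst _ _ c Hc HG)).
  eapply gen_ext_pos; [|replace (Gamma (s + INR j) / (Gamma s * c ^ j)) with (/ (Gamma s * c ^ j) * Gamma (s + INR j)) by (unfold Rdiv; ring); exact H].
  intros z Hz. unfold I_ker, gi. fold c. fold s.
  assert (Hcz : 0 < c * z) by nra.
  replace (s + INR j - 1) with ((s - 1) + INR j) by ring.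
  rewrite Rpower_plus, Rpower_pow by auto.
  replace (eta * beta * z) with (c * z) by (unfold c; ring).
  replace (- eta * beta * z) with (- (c * z)) by (unfold c; ring).
  replace (eta * beta) with c by (unfold c; ring).
  rewrite Rpow_mult_distr.
  assert (0 < c ^ j) by (apply pow_lt; auto).
  field. lra.
Qed.

Definition mu1 s c := s / c.
Definition mu2 s c := s * (s + 1) / c ^ 2.
Definition mu3 s c := s * (s + 1) * (s + 2) / c ^ 3.
Definition mu4 s c := s * (s + 1) * (s + 2) * (s + 3) / c ^ 4.

Lemma Gamma_shift : forall j, Gamma (s + INR (S j)) = (s + INR j) * Gamma (s + INR j).
Proof.
  intros. rewrite S_INR. replace (s + (INR j + 1)) with ((s + INR j) + 1) by ring.
  apply Gamma_rec. assert (0 <= INR j) by apply pos_INR. lra.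
Qed.

Lemma Ik_poly : forall e0 e1 e2 e3 e4,
  is_RInt_gen (fun z => I_ker beta eta k z * (e0 + e1 * z + e2 * z ^ 2 + e3 * z ^ 3 + e4 * z ^ 4)) F0 Finf
   (e0 + e1 * mu1 s c + e2 * mu2 s c + e3 * mu3 s c + e4 * mu4 s c).
Proof.
  intros.
  destruct (Gamma_spec _ Hs) as [_ HGs].
  assert (H := gen_plus _ _ _ _ (gen_plus _ _ _ _ (gen_plus _ _ _ _ (gen_plus _ _ _ _
     (gen_scal _ _ e0 (Ik_mom 0)) (gen_scal _ _ e1 (Ik_mom 1))) (gen_scal _ _ e2 (Ik_mom 2)))
     (gen_scal _ _ e3 (Ik_mom 3))) (gen_scal _ _ e4 (Ik_mom 4))).
  eapply gen_ext_pos; [|match type of H with is_RInt_gen _ _ _ ?V => replace (e0 + e1 * mu1 s c + e2 * mu2 s c + e3 * mu3 s c + e4 * mu4 s c) with V end; [exact H|]].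
  - intros z _. simpl. ring.
  - rewrite (Gamma_shift 3), (Gamma_shift 2), (Gamma_shift 1), (Gamma_shift 0).
    simpl INR. unfold mu1, mu2, mu3, mu4. rewrite Rplus_0_r. field. split; lra.
Qed.
End Ik.


Lemma gen_bound : forall (f g : R -> R) lf lg, is_RInt_gen f F0 Finf lf -> is_RInt_gen g F0 Finf lg ->
  (forall z, 0 < z -> Rabs (f z) <= g z) -> Rabs lf <= lg.
Proof.
  intros f g lf lg Hf Hg Hfg.
  apply (RInt_gen_norm (Fa := F0) (Fb := Finf) f g lf lg).
  - apply Filter_prod with (fun a => 0 < a < 1) (fun b => 1 < b).
    exists (mkposreal 1 Rlt_0_1). intros y Hy Hy0. assert (Hy2 := proj1 (ball_R _ _ _) Hy).
    simpl in Hy2. rewrite Rminus_0_r in Hy2. apply Rabs_def2 in Hy2. lra.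
    exists 1. auto. intros; simpl; lra.
  - apply Filter_prod with (fun a => 0 < a) (fun b => True).
    exists (mkposreal 1 Rlt_0_1). intros; auto. exists 0. auto.
    intros a b Ha _ x Hx. simpl in Hx. apply Hfg. lra.
  - auto.
  - auto.
Qed.

Section Ik2.
Variables beta eta : R.
Variable k : nat.
Hypothesis Hb : 0 < beta.
Hypothesis He : 0 < eta.
Hypothesis Hk : (1 <= k)%nat.

Lemma Ik_nonneg : forall z, 0 < z -> 0 <= I_ker beta eta k z.
Proof.
  intros. unfold I_ker.
  assert (Hs : 0 < INR k * beta) by (assert (1 <= INR k) by (apply (le_INR 1); auto); nra).
  destruct (Gamma_spec _ Hs) as [_ HG].
  apply Rdiv_le_0_compat; auto. apply Rmult_le_pos. apply Rmult_le_pos. nra.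
  left; apply exp_pos. unfold Rpower; left; apply exp_pos.
Qed.

Lemma Ik_cont : forall z, 0 < z -> continuous (I_ker beta eta k) z.
Proof.
  intros. apply exd_cont. unfold I_ker, Rpower. auto_derive.
  apply Rmult_lt_0_compat; nra.
Qed.

Lemma Ik_f_ex : forall (f : R -> R) (M : R), (forall z, 0 < z -> continuous f z) ->
  (forall z, 0 < z -> Rabs (f z) <= M) ->
  ex_RInt_gen (fun z => I_ker beta eta k z * f z) F0 Finf.
Proof.
  intros f M Hc HM.
  assert (HI := Ik_poly beta eta k Hb He Hk M 0 0 0 0).
  eapply gen_dom; [ | | | exact HI].
  - intros a b Ha Hab. apply exR_cont. intros z Hz. rewrite Rmin_left in Hz by lra.
    apply (continuous_mult (K := R_AbsRing)). apply Ik_cont; lra. apply Hc; lra.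
  - intros a b Ha Hab. apply exR_cont. intros z Hz. rewrite Rmin_left in Hz by lra.
    apply (continuous_mult (K := R_AbsRing)). apply Ik_cont; lra.
    apply exd_cont. auto_derive. auto.
  - intros z Hz. rewrite Rabs_mult, (Rabs_pos_eq (I_ker _ _ _ _)) by (apply Ik_nonneg; auto).
    replace (M + 0 * z + 0 * z ^ 2 + 0 * z ^ 3 + 0 * z ^ 4) with M by ring.
    apply Rmult_le_compat_l. apply Ik_nonneg; auto. auto.
Qed.
End Ik2.


Lemma cpt_exd : forall (f : R -> R) x, ex_derive f x -> continuity_pt f x.
Proof. intros. apply continuity_pt_filterlim. apply exd_cont. auto. Qed.

Lemma pow2_abs : forall y, y ^ 2 = Rabs y * Rabs y.
Proof. intros. rewrite <- Rabs_mult. rewrite Rabs_pos_eq by nra. ring. Qed.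

Lemma der_interior : forall f f' y, deriv_on_nonneg f f' -> 0 < y -> is_derive f y (f' y).
Proof.
  intros f f' y Hd Hy. apply is_derive_Reals. intros eps Heps.
  specialize (Hd y ltac:(lra)).
  assert (H := proj1 (filterlim_locally _ _) Hd (mkposreal eps Heps)).
  destruct H as [d Hd2].
  assert (Hm : 0 < Rmin d y) by (apply Rmin_glb_lt; [destruct d|]; auto).
  exists (mkposreal _ Hm). intros h Hh0 Hh. simpl in Hh.
  assert (Hh1 : Rabs h < d) by (apply Rlt_le_trans with (Rmin d y); auto; apply Rmin_l).
  assert (Hh2 : Rabs h < y) by (apply Rlt_le_trans with (Rmin d y); auto; apply Rmin_r).
  assert (B := Hd2 h). assert (Hb : ball 0 d h) by (apply ball_R; rewrite Rminus_0_r; auto).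
  specialize (B Hb). assert (Hc : h <> 0 /\ 0 <= y + h) by (split; auto; apply Rabs_def2 in Hh2; lra).
  specialize (B Hc). apply (proj1 (ball_R _ _ _)) in B. simpl in B. auto.
Qed.

Lemma cont_max0 : forall f y, cont_on_nonneg f -> 0 <= y -> continuity_pt (fun t => f (Rmax 0 t)) y.
Proof.
  intros f y Hc Hy. apply continuity_pt_filterlim.
  rewrite Rmax_right by auto.
  apply (filterlim_locally (F := locally y)). intros eps.
  specialize (Hc y Hy).
  assert (H := proj1 (filterlim_locally _ _) Hc eps).
  destruct H as [d Hd]. exists d. intros t Ht.
  apply Hd. 2: apply Rmax_l.
  apply ball_R. assert (Ht2 := proj1 (ball_R _ _ _) Ht). simpl in Ht2 |- *.
  unfold Rmax. destruct (Rle_dec 0 t). auto.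
  apply Rle_lt_trans with (Rabs (t - y)); auto.
  rewrite (Rabs_left (t - y)) by lra. rewrite Rabs_left1 by lra. lra.
Qed.

Lemma der_max0 : forall f f' y, deriv_on_nonneg f f' -> 0 < y -> is_derive (fun t => f (Rmax 0 t)) y (f' y).
Proof.
  intros. apply (is_derive_ext_loc f). exists (mkposreal y H0). intros t Ht.
  assert (Ht2 := proj1 (ball_R _ _ _) Ht). simpl in Ht2. apply Rabs_def2 in Ht2.
  rewrite Rmax_right by lra. auto. apply der_interior; auto.
Qed.

Section Taylor.
Variables (Phi Phi1 Phi2 : R -> R) (x : R).
Hypothesis H1 : deriv_on_nonneg Phi Phi1.
Hypothesis H2 : deriv_on_nonneg Phi1 Phi2.
Hypothesis C0 : cont_on_nonneg Phi.
Hypothesis C1 : cont_on_nonneg Phi1.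
Hypothesis Hx : 0 <= x.

Definition rem (z : R) := Phi z - Phi x - Phi1 x * (z - x) - Phi2 x * (z - x) ^ 2 / 2.

Lemma step1 : forall y, 0 <= y -> exists c, 0 <= c /\ Rabs (c - x) <= Rabs (y - x) /\
  Phi1 y - Phi1 x - Phi2 x * (y - x) = (Phi2 c - Phi2 x) * (y - x).
Proof.
  intros y Hy.
  destruct (MVT_gen (fun t => Phi1 (Rmax 0 t) - Phi2 x * t) x y (fun t => Phi2 t - Phi2 x)) as [c [Hc E]].
  - intros t Ht. assert (0 < t) by (assert (0 <= Rmin x y) by (apply Rmin_glb; auto); lra).
    apply (is_derive_minus (K := R_AbsRing) (V := R_NormedModule) (fun t => Phi1 (Rmax 0 t)) (fun t => Phi2 x * t)).
    apply der_max0; auto. auto_derive; auto. ring.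
  - intros t Ht. assert (0 <= t) by (assert (0 <= Rmin x y) by (apply Rmin_glb; auto); lra).
    apply continuity_pt_minus. apply cont_max0; auto.
    apply (cpt_exd (fun t => Phi2 x * t)). auto_derive. auto.
  - exists c. assert (Hmin : 0 <= Rmin x y) by (apply Rmin_glb; auto).
    split. lra. split.
    + unfold Rmin, Rmax in Hc. destruct (Rle_dec x y).
      rewrite !Rabs_pos_eq by lra. lra. rewrite !Rabs_left1 by lra. lra.
    + rewrite !Rmax_right in E by auto. lra.
Qed.

Lemma rem_bound : forall z, 0 <= z -> exists c, 0 <= c /\ Rabs (c - x) <= Rabs (z - x) /\
  Rabs (rem z) <= Rabs (Phi2 c - Phi2 x) * (z - x) ^ 2.
Proof.
  intros z Hz.
  destruct (MVT_gen (fun t => Phi (Rmax 0 t) + (- Phi x - Phi1 x * (t - x) - Phi2 x * (t - x) ^ 2 / 2)) x z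
     (fun t => Phi1 t - Phi1 x - Phi2 x * (t - x))) as [c2 [Hc2 E]].
  - intros t Ht. assert (0 < t) by (assert (0 <= Rmin x z) by (apply Rmin_glb; auto); lra).
    assert (Hd1 := der_max0 Phi Phi1 t H1 H).
    assert (Hd2 : is_derive (fun t => - Phi x - Phi1 x * (t - x) - Phi2 x * (t - x) ^ 2 / 2) t (- Phi1 x - Phi2 x * (t - x)))
      by (auto_derive; auto; field).
    replace (Phi1 t - Phi1 x - Phi2 x * (t - x)) with (plus (Phi1 t) (- Phi1 x - Phi2 x * (t - x)))
      by (unfold plus; simpl; ring).
    apply (is_derive_plus _ _ _ _ _ Hd1 Hd2).
  - intros t Ht. assert (0 <= t) by (assert (0 <= Rmin x z) by (apply Rmin_glb; auto); lra).
    apply (continuity_pt_plus (fun t => Phi (Rmax 0 t)) (fun t => - Phi x - Phi1 x * (t - x) - Phi2 x * (t - x) ^ 2 / 2)).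
    apply cont_max0; auto.
    apply (cpt_exd (fun t => - Phi x - Phi1 x * (t - x) - Phi2 x * (t - x) ^ 2 / 2)). auto_derive. auto.
  - assert (Hmin : 0 <= Rmin x z) by (apply Rmin_glb; auto).
    assert (Hc2' : 0 <= c2) by lra.
    assert (Hd2 : Rabs (c2 - x) <= Rabs (z - x)).
    { unfold Rmin, Rmax in Hc2. destruct (Rle_dec x z).
      rewrite !Rabs_pos_eq by lra. lra. rewrite !Rabs_left1 by lra. lra. }
    destruct (step1 c2 Hc2') as [c1 [Hc1 [Hd1 E1]]].
    exists c1. split; auto. split. lra.
    rewrite !Rmax_right in E by auto.
    assert (Er : rem z = (Phi2 c1 - Phi2 x) * (c2 - x) * (z - x)).
    { unfold rem. rewrite <- E1. replace ((x - x) ^ 2) with 0 in E by ring. lra. }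
    rewrite Er. rewrite !Rabs_mult.
    rewrite (pow2_abs (z - x)).
    rewrite Rmult_assoc. apply Rmult_le_compat_l. apply Rabs_pos.
    apply Rmult_le_compat_r. apply Rabs_pos. auto.
Qed.
End Taylor.

Lemma rem_eps : forall (Phi Phi1 Phi2 : R -> R) x, deriv_on_nonneg Phi Phi1 -> deriv_on_nonneg Phi1 Phi2 ->
  cont_on_nonneg Phi -> cont_on_nonneg Phi1 -> cont_on_nonneg Phi2 -> bounded_on_nonneg Phi2 -> 0 <= x ->
  forall eps, 0 < eps -> exists C, 0 <= C /\ forall z, 0 <= z ->
    Rabs (rem Phi Phi1 Phi2 x z) <= eps * (z - x) ^ 2 + C * (z - x) ^ 4.
Proof.
  intros Phi Phi1 Phi2 x H1 H2 C0 C1 C2 [M HM] Hx eps Heps.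
  assert (HM0 : 0 <= M) by (specialize (HM x Hx); assert (0 <= Rabs (Phi2 x)) by apply Rabs_pos; lra).
  assert (H := proj1 (filterlim_locally _ _) (C2 x Hx) (mkposreal eps Heps)).
  destruct H as [d Hd].
  exists (2 * M / (d * d)). split. apply Rdiv_le_0_compat. lra. destruct d; simpl; nra.
  intros z Hz. destruct (rem_bound Phi Phi1 Phi2 x H1 H2 C0 C1 Hx z Hz) as [c [Hc [Hcx Hr]]].
  assert (Hq : 0 <= (z - x) ^ 2) by (rewrite pow2_abs; apply Rmult_le_pos; apply Rabs_pos).
  assert (Hq4 : 0 <= (z - x) ^ 4) by (replace ((z - x) ^ 4) with ((z - x) ^ 2 * (z - x) ^ 2) by ring; apply Rmult_le_pos; auto).
  assert (Hd0 : 0 < d) by (destruct d; auto).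
  destruct (Rlt_or_le (Rabs (z - x)) d) as [Hlt|Hge].
  - assert (B : ball x d c) by (apply ball_R; lra).
    specialize (Hd c B Hc). apply (proj1 (ball_R _ _ _)) in Hd. simpl in Hd.
    assert (Rabs (Phi2 c - Phi2 x) * (z - x) ^ 2 <= eps * (z - x) ^ 2) by (apply Rmult_le_compat_r; lra).
    assert (0 <= 2 * M / (d * d) * (z - x) ^ 4) by (apply Rmult_le_pos; auto; apply Rdiv_le_0_compat; nra).
    lra.
  - assert (Hb : Rabs (Phi2 c - Phi2 x) <= 2 * M).
    { apply Rle_trans with (Rabs (Phi2 c) + Rabs (Phi2 x)).
      unfold Rminus. rewrite <- (Rabs_Ropp (Phi2 x)). apply Rabs_triang.
      assert (HMc := HM c Hc). assert (HMx := HM x Hx). lra. }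
    assert (Hz2 : d * d <= (z - x) ^ 2).
    { rewrite (pow2_abs (z - x)). nra. }
    assert (E4 : (z - x) ^ 4 = (z - x) ^ 2 * (z - x) ^ 2) by ring.
    assert (Rabs (Phi2 c - Phi2 x) * (z - x) ^ 2 <= 2 * M / (d * d) * (z - x) ^ 4).
    { rewrite E4. apply Rle_trans with (2 * M * (z - x) ^ 2).
      apply Rmult_le_compat_r; auto.
      apply Rmult_le_reg_r with (d * d). nra.
      replace (2 * M / (d * d) * ((z - x) ^ 2 * (z - x) ^ 2) * (d * d)) with (2 * M * (z - x) ^ 2 * (z - x) ^ 2) by (field; lra).
      apply Rmult_le_compat_l. nra. auto. }
    assert (0 <= eps * (z - x) ^ 2) by nra.
    lra.
Qed.


Lemma cont_pos : forall f z, cont_on_nonneg f -> 0 < z -> continuous f z.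
Proof.
  intros f z Hc Hz. specialize (Hc z ltac:(lra)).
  apply (filterlim_locally (F := locally z)). intros eps.
  destruct (proj1 (filterlim_locally _ _) Hc eps) as [d Hd].
  assert (Hm : 0 < Rmin d z) by (apply Rmin_glb_lt; [destruct d|]; auto).
  exists (mkposreal _ Hm). intros y Hy. apply Hd.
  apply ball_R. assert (Hy2 := proj1 (ball_R _ _ _) Hy). simpl in Hy2.
  apply Rlt_le_trans with (Rmin d z). auto. apply Rmin_l.
  assert (Hy2 := proj1 (ball_R _ _ _) Hy). simpl in Hy2.
  assert (Rmin d z <= z) by apply Rmin_r. apply Rabs_def2 in Hy2. lra.
Qed.

Lemma ser_nonneg_sum : forall (a : nat -> R) l, is_series a l -> (forall n, 0 <= a n) -> 0 <= l.
Proof.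
  intros a l H Hp. apply is_series_Reals in H.
  apply Rle_trans with (sum_f_R0 a 0). simpl; auto. apply sum_incr; auto.
Qed.

Lemma ser_abs_le : forall (a b : nat -> R) la lb, is_series a la -> is_series b lb ->
  (forall n, Rabs (a n) <= b n) -> Rabs la <= lb.
Proof.
  intros a b la lb Ha Hb Hab.
  assert (H1 := ser_nonneg_sum _ _ (ser_pl _ _ _ _ Hb (ser_sc _ _ (-1) Ha))).
  assert (H2 := ser_nonneg_sum _ _ (ser_pl _ _ _ _ Hb Ha)).
  assert (H1' : 0 <= lb + -1 * la) by (apply H1; intros n; specialize (Hab n); apply Rabs_le_between in Hab; lra).
  assert (H2' : 0 <= lb + la) by (apply H2; intros n; specialize (Hab n); apply Rabs_le_between in Hab; lra).
  apply Rabs_le_between. lra.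
Qed.

Lemma minusR : forall a b : R, minus a b = a - b.
Proof. reflexivity. Qed.

Section Main.
Variables (alpha beta : R) (Phi Phi1 Phi2 : R -> R) (x : R).
Hypothesis Ha : -1 < alpha.
Hypothesis Hb : 0 < beta.
Hypothesis H1 : deriv_on_nonneg Phi Phi1.
Hypothesis H2 : deriv_on_nonneg Phi1 Phi2.
Hypothesis C0 : cont_on_nonneg Phi.
Hypothesis C1 : cont_on_nonneg Phi1.
Hypothesis C2 : cont_on_nonneg Phi2.
Hypothesis B0 : bounded_on_nonneg Phi.
Hypothesis B2 : bounded_on_nonneg Phi2.
Hypothesis Hx : 0 <= x.

Variable eta : R.
Hypothesis He : 0 < eta.
Variables eps C : R.
Hypothesis Heps : 0 < eps.
Hypothesis HC0 : 0 <= C.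
Hypothesis HC : forall z, 0 <= z -> Rabs (rem Phi Phi1 Phi2 x z) <= eps * (z - x) ^ 2 + C * (z - x) ^ 4.

Let c := eta * beta.
Let s k := INR k * beta.
Definition A1 k := mu1 (INR k * beta) (eta * beta) - x.
Definition A2 k := mu2 (INR k * beta) (eta * beta) - 2 * x * mu1 (INR k * beta) (eta * beta) + x ^ 2.
Definition A4 k := mu4 (INR k * beta) (eta * beta) - 4 * x * mu3 (INR k * beta) (eta * beta)
  + 6 * x ^ 2 * mu2 (INR k * beta) (eta * beta) - 4 * x ^ 3 * mu1 (INR k * beta) (eta * beta) + x ^ 4.

Definition Vk (k : nat) := match k with
  | O => Phi 0
  | S _ => RInt_gen (fun z => I_ker beta eta k z * Phi z) F0 Finf end.

Definition Wk k := Vk k - (Phi x + Phi1 x * A1 k + Phi2 x / 2 * A2 k).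

Lemma Vk_bound : forall M, (forall z, 0 <= z -> Rabs (Phi z) <= M) -> forall k, Rabs (Vk k) <= M.
Proof.
  intros M HM k. destruct k as [|j].
  - simpl. apply HM; lra.
  - simpl Vk. set (k := S j).
    assert (Hk : (1 <= k)%nat) by (unfold k; lia).
    assert (Hex := Ik_f_ex beta eta k Hb He Hk Phi M (fun z Hz => cont_pos Phi z C0 Hz) (fun z Hz => HM z ltac:(lra))).
    assert (Hi := RInt_gen_correct _ Hex).
    assert (HI := Ik_poly beta eta k Hb He Hk M 0 0 0 0).
    assert (E := gen_bound _ _ _ _ Hi HI). 
    replace (M + 0 * mu1 (INR k * beta) (eta * beta) + 0 * mu2 (INR k * beta) (eta * beta) + 0 * mu3 (INR k * beta) (eta * beta) + 0 * mu4 (INR k * beta) (eta * beta)) with M in E by ring.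
    apply E. intros z Hz. rewrite Rabs_mult, Rabs_pos_eq by (apply Ik_nonneg; auto).
    replace (M + 0 * z + 0 * z ^ 2 + 0 * z ^ 3 + 0 * z ^ 4) with M by ring.
    apply Rmult_le_compat_l. apply Ik_nonneg; auto. apply HM; lra.
Qed.

Lemma Wk_bound : forall k, Rabs (Wk k) <= eps * A2 k + C * A4 k.
Proof.
  intros k. destruct k as [|j].
  - unfold Wk, A1, A2, A4, mu1, mu2, mu3, mu4. simpl Vk. simpl INR. rewrite !Rmult_0_l.
    assert (HH := HC 0 (Rle_refl 0)). unfold rem in HH.
    match goal with |- Rabs ?a <= ?b => replace a with (Phi 0 - Phi x - Phi1 x * (0 - x) - Phi2 x * (0 - x) ^ 2 / 2) by (field; lra);
      replace b with (eps * (0 - x) ^ 2 + C * (0 - x) ^ 4) by (field; lra) end.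
    auto.
  - set (k := S j).
    assert (Hk : (1 <= k)%nat) by (unfold k; lia).
    destruct B0 as [M HM].
    assert (Hex := Ik_f_ex beta eta k Hb He Hk Phi M (fun z Hz => cont_pos Phi z C0 Hz) (fun z Hz => HM z ltac:(lra))).
    assert (Hi := RInt_gen_correct _ Hex).
    assert (HP := Ik_poly beta eta k Hb He Hk (Phi x - Phi1 x * x + Phi2 x * x ^ 2 / 2) (Phi1 x - Phi2 x * x) (Phi2 x / 2) 0 0).
    assert (HB := Ik_poly beta eta k Hb He Hk (eps * x ^ 2 + C * x ^ 4) (- 2 * eps * x - 4 * C * x ^ 3) (eps + 6 * C * x ^ 2) (- 4 * C * x) C).
    assert (HD := gen_minus _ _ _ _ Hi HP).
    assert (E := gen_bound _ _ _ _ HD HB).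
    unfold Wk.
    match type of E with _ -> Rabs ?a <= ?b =>
      assert (Ea : Vk k - (Phi x + Phi1 x * A1 k + Phi2 x / 2 * A2 k) = a);
      [|assert (Eb : eps * A2 k + C * A4 k = b); [|rewrite Ea, Eb]] end.
    + change (Vk k) with (RInt_gen (fun z => I_ker beta eta k z * Phi z) F0 Finf).
      unfold A1, A2. field.
    + unfold A2, A4. ring.
    + apply E. intros z Hz. rewrite <- Rmult_minus_distr_l.
      rewrite Rabs_mult, (Rabs_pos_eq (I_ker _ _ _ _)) by (apply Ik_nonneg; auto).
      apply Rmult_le_compat_l. apply Ik_nonneg; auto.
      assert (HH := HC z ltac:(lra)). unfold rem in HH.
      match goal with |- Rabs ?a <= ?b => replace a with (Phi z - Phi x - Phi1 x * (z - x) - Phi2 x * (z - x) ^ 2 / 2) by (field; lra);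
        replace b with (eps * (z - x) ^ 2 + C * (z - x) ^ 4) by ring end. auto.
Qed.

Let q k := p_eta alpha eta k x.
Let Hu : 0 <= eta * x. Proof. nra. Qed.

Lemma q_series : is_series q 1.
Proof.
  assert (H := Kpoly alpha eta x Ha Hu 1 0 0 0 0).
  eapply ser_ext; [|replace 1 with (1 * K0 + 0 * K1 alpha (eta * x / 2) + 0 * K2 alpha (eta * x / 2) + 0 * K3 alpha (eta * x / 2) + 0 * K4 alpha (eta * x / 2)) by (unfold K0; ring); exact H].
  intros; unfold q; ring.
Qed.

Lemma R_op_series : is_series (fun k => q k * Vk k) (R_op alpha beta eta Phi x).
Proof.
  destruct B0 as [M HM].
  assert (Hex : ex_series (fun k => q k * Vk k)).
  { apply (ex_series_le (K := R_AbsRing) (V := R_CompleteNormedModule) _ (fun k => M * q k)).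
    - intros n. change (norm (q n * Vk n)) with (Rabs (q n * Vk n)).
      rewrite Rabs_mult, Rabs_pos_eq by (apply q_nonneg; auto). rewrite Rmult_comm.
      apply Rmult_le_compat_r. apply q_nonneg; auto. apply Vk_bound; auto.
    - eexists. apply ser_sc. apply q_series. }
  assert (E := Series_incr_1 _ Hex).
  assert (E2 : R_op alpha beta eta Phi x = Series (fun k => q k * Vk k)).
  { rewrite E. unfold R_op. reflexivity. }
  rewrite E2. apply Series_correct. auto.
Qed.

Definition E2v := (x * beta + 3 * x * beta ^ 2) / (eta * beta ^ 2) + (beta + 3 * beta ^ 2 + alpha * beta + 4 * alpha * beta ^ 2 + alpha ^ 2 * beta ^ 2) / (eta ^ 2 * beta ^ 2).
Definition c0v := (6*beta + 33*beta^2 + 78*beta^3 + 75*beta^4 + 6*alpha*beta + 44*alpha*beta^2 + 126*alpha*beta^3 + 138*alpha*beta^4 + 11*alpha^2*beta^2 + 54*alpha^2*beta^3 + 78*alpha^2*beta^4 + 6*alpha^3*beta^3 + 16*alpha^3*beta^4 + alpha^4*beta^4).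
Definition c1v := (6*x*beta + 47*x*beta^2 + 150*x*beta^3 + 181*x*beta^4 + 14*alpha*x*beta^2 + 78*alpha*x*beta^3 + 124*alpha*x*beta^4 + 6*alpha^2*x*beta^3 + 18*alpha^2*x*beta^4).
Definition c2v := (3*x^2*beta^2 + 18*x^2*beta^3 + 27*x^2*beta^4).
Definition E4v := (c0v + c1v * eta + c2v * eta ^ 2) / (eta ^ 4 * beta ^ 4).

Lemma E1_series : is_series (fun k => q k * A1 k) ((1 + alpha) / eta).
Proof.
  assert (H := Kpoly alpha eta x Ha Hu (- x) (1 / eta) 0 0 0).
  eapply ser_ext; [|match type of H with is_series _ ?V => replace ((1 + alpha) / eta) with V; [exact H|] end].
  - intros k. unfold q, A1, mu1. f_equal. field. lra.
  - unfold K0, K1. field. lra.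
Qed.

Lemma E2_series : is_series (fun k => q k * A2 k) E2v.
Proof.
  assert (H := Kpoly alpha eta x Ha Hu (x ^ 2) (1 / (beta * eta ^ 2) - 2 * x / eta) (1 / eta ^ 2) 0 0).
  eapply ser_ext; [|match type of H with is_series _ ?V => replace E2v with V; [exact H|] end].
  - intros k. unfold q, A2, mu1, mu2. f_equal. field. lra.
  - unfold E2v, K0, K1, K2. field. lra.
Qed.

Lemma E4_series : is_series (fun k => q k * A4 k) E4v.
Proof.
  set (den := eta ^ 4 * beta ^ 4).
  assert (H := Kpoly alpha eta x Ha Hu
    ((eta^4*x^4*beta^4) / den)
    ((6*beta - 8*eta*x*beta^2 + 6*eta^2*x^2*beta^3 - 4*eta^3*x^3*beta^4) / den)
    ((11*beta^2 - 12*eta*x*beta^3 + 6*eta^2*x^2*beta^4) / den)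
    ((6*beta^3 - 4*eta*x*beta^4) / den)
    ((beta^4) / den)).
  eapply ser_ext; [|match type of H with is_series _ ?V => replace E4v with V; [exact H|] end].
  - intros k. unfold q, A4, mu1, mu2, mu3, mu4, den. f_equal. field. lra.
  - unfold E4v, c0v, c1v, c2v, den, K0, K1, K2, K3, K4. field. lra.
Qed.

Lemma main_bound :
  Rabs (eta * (R_op alpha beta eta Phi x - Phi x) - ((1 + alpha) * Phi1 x + x * (3 * beta + 1) / (2 * beta) * Phi2 x))
  <= Rabs (Phi2 x) / 2 * Rabs ((beta + 3 * beta ^ 2 + alpha * beta + 4 * alpha * beta ^ 2 + alpha ^ 2 * beta ^ 2) / (eta * beta ^ 2))
     + eta * (eps * E2v + C * E4v).
Proof.
  set (S := R_op alpha beta eta Phi x).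
  assert (HW : is_series (fun k => q k * Wk k) (S - Phi x * 1 - Phi1 x * ((1 + alpha) / eta) - Phi2 x / 2 * E2v)).
  { assert (H := ser_pl _ _ _ _ (ser_pl _ _ _ _ (ser_pl _ _ _ _ R_op_series (ser_sc _ _ (- Phi x) q_series))
        (ser_sc _ _ (- Phi1 x) E1_series)) (ser_sc _ _ (- (Phi2 x / 2)) E2_series)).
    eapply ser_ext; [|match type of H with is_series _ ?V => replace (S - Phi x * 1 - Phi1 x * ((1 + alpha) / eta) - Phi2 x / 2 * E2v) with V by (unfold S; ring); exact H end].
    intros k. unfold Wk. ring. }
  assert (HB := ser_pl _ _ _ _ (ser_sc _ _ eps E2_series) (ser_sc _ _ C E4_series)).
  assert (Hle := ser_abs_le _ _ _ _ HW HB).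
  assert (Hle' : Rabs (S - Phi x * 1 - Phi1 x * ((1 + alpha) / eta) - Phi2 x / 2 * E2v) <= eps * E2v + C * E4v).
  { apply Hle. intros k. rewrite Rabs_mult, Rabs_pos_eq by (apply q_nonneg; auto).
    replace (eps * (q k * A2 k) + C * (q k * A4 k)) with (q k * (eps * A2 k + C * A4 k)) by ring.
    apply Rmult_le_compat_l. apply q_nonneg; auto. apply Wk_bound. }
  set (D := (beta + 3 * beta ^ 2 + alpha * beta + 4 * alpha * beta ^ 2 + alpha ^ 2 * beta ^ 2) / (eta * beta ^ 2)).
  assert (E : eta * (S - Phi x) - ((1 + alpha) * Phi1 x + x * (3 * beta + 1) / (2 * beta) * Phi2 x) =
     Phi2 x / 2 * D + eta * (S - Phi x * 1 - Phi1 x * ((1 + alpha) / eta) - Phi2 x / 2 * E2v)).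
  { unfold D, E2v. field. lra. }
  rewrite E. eapply Rle_trans. apply Rabs_triang.
  apply Rplus_le_compat.
  - rewrite Rabs_mult. right. f_equal. rewrite Rabs_div by lra. rewrite (Rabs_pos_eq 2) by lra. reflexivity.
  - rewrite Rabs_mult, (Rabs_pos_eq eta) by lra. apply Rmult_le_compat_l; lra.
Qed.
End Main.



Lemma quad_bound : forall c0 c1 c2 eta beta, 1 <= eta -> 0 < beta ->
  eta * ((c0 + c1 * eta + c2 * eta ^ 2) / (eta ^ 4 * beta ^ 4)) <= (Rabs c0 + Rabs c1 + Rabs c2) / beta ^ 4 / eta.
Proof.
  intros c0 c1 c2 eta beta He Hb.
  assert (Hb4 : 0 < beta ^ 4) by (apply pow_lt; auto).
  assert (He3 : 0 < eta ^ 3) by (apply pow_lt; lra).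
  replace (eta * ((c0 + c1 * eta + c2 * eta ^ 2) / (eta ^ 4 * beta ^ 4))) with ((c0 + c1 * eta + c2 * eta ^ 2) / (eta ^ 3 * beta ^ 4)) by (field; lra).
  replace ((Rabs c0 + Rabs c1 + Rabs c2) / beta ^ 4 / eta) with ((Rabs c0 + Rabs c1 + Rabs c2) * eta ^ 2 / (eta ^ 3 * beta ^ 4)) by (field; lra).
  apply Rmult_le_compat_r. left; apply Rinv_0_lt_compat; nra.
  assert (c0 <= Rabs c0) by apply Rle_abs. assert (c1 <= Rabs c1) by apply Rle_abs. assert (c2 <= Rabs c2) by apply Rle_abs.
  assert (0 <= Rabs c0) by apply Rabs_pos. assert (0 <= Rabs c1) by apply Rabs_pos.
  assert (1 <= eta ^ 2) by nra.
  assert (c0 <= Rabs c0 * eta ^ 2) by nra.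
  assert (c1 * eta <= Rabs c1 * eta) by (apply Rmult_le_compat_r; lra).
  assert (Rabs c1 * eta <= Rabs c1 * eta ^ 2) by (apply Rmult_le_compat_l; [lra|]; replace (eta ^ 2) with (eta * eta) by ring; nra).
  assert (c2 * eta ^ 2 <= Rabs c2 * eta ^ 2) by (apply Rmult_le_compat_r; lra).
  lra.
Qed.

Theorem mainTheorem6 (alpha beta : R) (Phi Phi1 Phi2 : R -> R) (x : R) :
  -1 < alpha -> 0 < beta ->
  deriv_on_nonneg Phi Phi1 -> deriv_on_nonneg Phi1 Phi2 ->
  cont_on_nonneg Phi -> cont_on_nonneg Phi1 -> cont_on_nonneg Phi2 ->
  bounded_on_nonneg Phi -> bounded_on_nonneg Phi1 -> bounded_on_nonneg Phi2 ->
  0 <= x ->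
  is_lim (fun eta => eta * (R_op alpha beta eta Phi x - Phi x)) p_infty
    ((1 + alpha) * Phi1 x + x * (3 * beta + 1) / (2 * beta) * Phi2 x).
Proof.
  intros Ha Hb H1 H2 C0 C1 C2 B0 B1 B2 Hx.
  apply is_lim_spec. intros eps. simpl.
  assert (Heps : 0 < eps) by (destruct eps; auto).
  set (Dn := beta + 3 * beta ^ 2 + alpha * beta + 4 * alpha * beta ^ 2 + alpha ^ 2 * beta ^ 2).
  assert (Hb2 : 0 < beta ^ 2) by nra.
  set (X := (x * beta + 3 * x * beta ^ 2) / beta ^ 2 + Rabs Dn / beta ^ 2).
  assert (HX : 0 <= X).
  { unfold X. apply Rplus_le_le_0_compat; apply Rdiv_le_0_compat; try lra. nra. apply Rabs_pos. }
  set (ep := eps / (4 * (X + 1))).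
  assert (Hep : 0 < ep) by (unfold ep; apply Rdiv_lt_0_compat; lra).
  destruct (rem_eps Phi Phi1 Phi2 x H1 H2 C0 C1 C2 B2 Hx ep Hep) as [C [HC0 HC]].
  set (c0 := c0v alpha beta). set (c1 := c1v alpha beta x). set (c2 := c2v beta x).
  set (K := Rabs (Phi2 x) / 2 * (Rabs Dn / beta ^ 2) + C * ((Rabs c0 + Rabs c1 + Rabs c2) / beta ^ 4)).
  assert (HK : 0 <= K).
  { unfold K. apply Rplus_le_le_0_compat. apply Rmult_le_pos. apply Rdiv_le_0_compat. apply Rabs_pos. lra.
    apply Rdiv_le_0_compat. apply Rabs_pos. lra.
    apply Rmult_le_pos. auto. apply Rdiv_le_0_compat. assert (0 <= Rabs c0) by apply Rabs_pos.
    assert (0 <= Rabs c1) by apply Rabs_pos. assert (0 <= Rabs c2) by apply Rabs_pos. lra. apply pow_lt; auto. }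
  exists (Rmax 1 (4 * K / eps)). intros eta Heta.
  assert (He1 : 1 < eta) by (apply Rle_lt_trans with (Rmax 1 (4 * K / eps)); [apply Rmax_l|auto]).
  assert (He2 : 4 * K / eps < eta) by (apply Rle_lt_trans with (Rmax 1 (4 * K / eps)); [apply Rmax_r|auto]).
  assert (He : 0 < eta) by lra.
  assert (Hm := main_bound alpha beta Phi Phi1 Phi2 x Ha Hb C0 B0 Hx eta He ep C HC).
  assert (Bi : Rabs (Phi2 x) / 2 * Rabs (Dn / (eta * beta ^ 2)) = Rabs (Phi2 x) / 2 * (Rabs Dn / beta ^ 2) / eta).
  { rewrite Rabs_div by nra. rewrite (Rabs_pos_eq (eta * beta ^ 2)) by nra. field. lra. }
  assert (Bii : eta * E2v alpha beta x eta <= X).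
  { unfold E2v, X. fold Dn.
    replace (eta * ((x * beta + 3 * x * beta ^ 2) / (eta * beta ^ 2) + Dn / (eta ^ 2 * beta ^ 2)))
      with ((x * beta + 3 * x * beta ^ 2) / beta ^ 2 + (Dn / beta ^ 2) / eta) by (field; lra).
    apply Rplus_le_compat_l.
    assert (0 <= Rabs Dn / beta ^ 2) by (apply Rdiv_le_0_compat; [apply Rabs_pos|lra]).
    assert (A : Dn / beta ^ 2 / eta <= Rabs Dn / beta ^ 2 / eta).
    { apply Rmult_le_compat_r. left; apply Rinv_0_lt_compat; lra.
      apply Rmult_le_compat_r. left; apply Rinv_0_lt_compat; lra. apply Rle_abs. }
    assert (B : Rabs Dn / beta ^ 2 / eta <= Rabs Dn / beta ^ 2).
    { apply (Rmult_le_reg_r eta). lra. replace (Rabs Dn / beta ^ 2 / eta * eta) with (Rabs Dn / beta ^ 2) by (field; lra). nra. }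
    lra. }
  assert (Biii : eta * E4v alpha beta x eta <= (Rabs c0 + Rabs c1 + Rabs c2) / beta ^ 4 / eta).
  { unfold E4v. apply quad_bound; lra. }
  fold Dn in Hm. rewrite Bi in Hm.
  assert (T1 : eta * (ep * E2v alpha beta x eta + C * E4v alpha beta x eta) <= ep * X + C * ((Rabs c0 + Rabs c1 + Rabs c2) / beta ^ 4 / eta)).
  { replace (eta * (ep * E2v alpha beta x eta + C * E4v alpha beta x eta)) with
      (ep * (eta * E2v alpha beta x eta) + C * (eta * E4v alpha beta x eta)) by ring.
    apply Rplus_le_compat. apply Rmult_le_compat_l; lra. apply Rmult_le_compat_l; lra. }
  assert (T2 : ep * X < eps / 4).
  { unfold ep. apply (Rmult_lt_reg_r (4 * (X + 1))). lra.
    replace (eps / (4 * (X + 1)) * X * (4 * (X + 1))) with (eps * X) by (field; lra).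
    replace (eps / 4 * (4 * (X + 1))) with (eps * X + eps) by field. lra. }
  assert (T3 : K / eta < eps / 4).
  { apply (Rmult_lt_reg_r eta). lra. replace (K / eta * eta) with K by (field; lra).
    apply (Rmult_lt_reg_r (4 / eps)). apply Rdiv_lt_0_compat; lra.
    replace (eps / 4 * eta * (4 / eps)) with eta by (field; lra).
    replace (K * (4 / eps)) with (4 * K / eps) by (field; lra). auto. }
  assert (T4 : Rabs (Phi2 x) / 2 * (Rabs Dn / beta ^ 2) / eta + C * ((Rabs c0 + Rabs c1 + Rabs c2) / beta ^ 4 / eta) = K / eta).
  { unfold K. field. lra. }
  lra.
Qed.
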